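(* There is $N$ such that for every integer $n_0\ge N$ there exist a real $2\times2$ matrix function $A$ on $\mathbb{T}^2\times\mathbb{R}^+$ in the regularity class $R(80,60)$ and a non-zero, uniformly $C^2$ real function $u$ on $\mathbb{T}^2\times\mathbb{R}^+$ with $\ddot u+\operatorname{div}(A\nabla u)=0$, and constants $c,C>0$ (depending on $n_0$) with $\sup_{\mathbb{T}^2\times\{t\ge T\}}|u|\le Ce^{-ce^{cT}}$ for all sufficiently large $T$. More precisely, there is an increasing sequence $t_n\ge0$ with $t_1=0$, $t_{n+1}-t_n>\frac3{100}$, $t_n\to\infty$, and a sequence of positive numbers $c_n$ with $c_1=1$, such that, with $k_n=2^{n+n_0-1}$: for odd $n$, on $\mathbb{T}^2\times[t_n,t_{n+1}]$ one has $u=f_n(t)\cos(k_nx)+g_{n+1}(t)\cos(k_{n+1}y)$ with $f_n,g_{n+1}$ uniformly $C^2$ on $\mathbb{R}^+$; on $\mathbb{T}^2\times[t_n,t_n+\frac1{100}]$, $u=c_n\cos(k_nx)e^{-k_nt}$ and $A=\mathrm{Id}$; on $\mathbb{T}^2\times[t_{n+1}-\frac1{100},t_{n+1}]$, $u=c_{n+1}\cos(k_{n+1}y)e^{-k_{n+1}t}$ and $A=\mathrm{Id}$; for even $n$ the same holds with the roles of $x$ and $y$ exchanged.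
   Context: $\mathbb{T}^2=(\mathbb{R}/2\pi\mathbb{Z})^2$ with coordinates $(x,y)$; $t\ge0$ the third coordinate. $\ddot u+\operatorname{div}(A\nabla u)$ means $\partial_t^2u+\sum_{i,j\in\{x,y\}}\partial_i(A_{ij}\partial_ju)$. Regularity class $R(\Lambda,C)$: $\Lambda^{-1}|\xi|^2\le\xi^TA\xi\le\Lambda|\xi|^2$ for all $\xi\in\mathbb{R}^2$ at every point, and the entries of $A$ are $C^1$ with all first partial derivatives in $x,y,t$ bounded by $C$ in absolute value. Uniformly $C^2$: all partial derivatives of order $\le2$ continuous and bounded. *)

(* Defs.v *)
From Stdlib Require Import Reals Lra.
From Coquelicot Require Import Coquelicot.
Open Scope R_scope.

(** Functions on T^2 x R^+ are represented as f : R -> R -> R -> R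
    (arguments x y t), required to be 2*pi-periodic in x and y. *)
Definition fun3 := R -> R -> R -> R.

Inductive coord := CX | CY.
Inductive dir := DX | DY | DT.

Definition dir_of (c : coord) : dir := match c with CX => DX | CY => DY end.

Definition pd (d : dir) (f : fun3) : fun3 :=
  fun x y t => match d with
  | DX => Derive (fun s => f s y t) x
  | DY => Derive (fun s => f x s t) y
  | DT => Derive (fun s => f x y s) t
  end.

Definition pdex (d : dir) (f : fun3) (x y t : R) : Prop :=
  match d with
  | DX => ex_derive (fun s => f s y t) x
  | DY => ex_derive (fun s => f x s t) y
  | DT => ex_derive (fun s => f x y s) t
  end.

Definition cont3 (f : fun3) (x y t : R) : Prop :=
  forall eps, 0 < eps -> exists delta, 0 < delta /\
    forall x' y' t', Rabs (x' - x) < delta -> Rabs (y' - y) < delta ->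
      Rabs (t' - t) < delta -> Rabs (f x' y' t' - f x y t) < eps.

Definition periodic_xy (f : fun3) : Prop :=
  forall x y t, f (x + 2 * PI) y t = f x y t /\ f x (y + 2 * PI) t = f x y t.

Definition uniformly_C2 (f : fun3) : Prop :=
  (forall x y t, 0 < t ->
     (forall d, pdex d f x y t) /\
     (forall d1 d2, pdex d2 (pd d1 f) x y t) /\
     cont3 f x y t /\
     (forall d, cont3 (pd d f) x y t) /\
     (forall d1 d2, cont3 (pd d2 (pd d1 f)) x y t)) /\
  exists M, forall x y t, 0 < t ->
     Rabs (f x y t) <= M /\
     (forall d, Rabs (pd d f x y t) <= M) /\
     (forall d1 d2, Rabs (pd d2 (pd d1 f) x y t) <= M).

Definition uniformly_C2_1 (f : R -> R) : Prop :=
  (forall t, 0 < t ->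
     ex_derive f t /\ ex_derive (Derive f) t /\
     continuity_pt f t /\ continuity_pt (Derive f) t /\
     continuity_pt (Derive (Derive f)) t) /\
  exists M, forall t, 0 < t ->
     Rabs (f t) <= M /\ Rabs (Derive f t) <= M /\
     Rabs (Derive (Derive f) t) <= M.

Definition matfun := coord -> coord -> fun3.

Definition coord_sum (F : coord -> R) : R := F CX + F CY.

Definition quadform (A : matfun) (x y t : R) (xi : coord -> R) : R :=
  coord_sum (fun i => coord_sum (fun j => xi i * A i j x y t * xi j)).

Definition sqnorm (xi : coord -> R) : R := coord_sum (fun i => xi i * xi i).

Definition reg_class (Lam C : R) (A : matfun) : Prop :=
  (forall i j, periodic_xy (A i j)) /\
  (forall x y t, 0 <= t -> forall xi : coord -> R,
     / Lam * sqnorm xi <= quadform A x y t xi /\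
     quadform A x y t xi <= Lam * sqnorm xi) /\
  (forall i j x y t, 0 < t ->
     cont3 (A i j) x y t /\
     forall d, pdex d (A i j) x y t /\ cont3 (pd d (A i j)) x y t /\
               Rabs (pd d (A i j) x y t) <= C).

Definition solves (A : matfun) (u : fun3) : Prop :=
  forall x y t, 0 < t ->
    pd DT (pd DT u) x y t
    + coord_sum (fun i => coord_sum (fun j =>
        pd (dir_of i) (fun x' y' t' => A i j x' y' t' * pd (dir_of j) u x' y' t')
           x y t)) = 0.

Definition A_id (A : matfun) (x y t : R) : Prop :=
  forall i j, A i j x y t = match i, j with
                            | CX, CX | CY, CY => 1
                            | _, _ => 0 end.

(** k_n = 2^(n + n0 - 1) (used for n >= 1) *)
Definition kk (n0 n : nat) : R := 2 ^ (n + n0 - 1).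

Definition svar (m : nat) (x y : R) : R := if Nat.odd m then x else y.

(* Main.v *)
Require Import Defs.
From Stdlib Require Import Reals Lra Lia Psatz FunctionalExtensionality ZArith.
From Coquelicot Require Import Coquelicot.
Open Scope R_scope.

Definition glue (a : R) (l r : R -> R) (x : R) : R :=
  if Rle_dec x a then l x else r x.

Lemma glue_derive (a : R) (l l' r r' : R -> R) :
  (forall x, is_derive l x (l' x)) -> (forall x, is_derive r x (r' x)) ->
  l a = r a -> l' a = r' a ->
  forall x, is_derive (glue a l r) x (glue a l' r' x).
Proof.
  intros Hl Hr E0 E1 x.
  destruct (Rtotal_order x a) as [Hx|[Hx|Hx]].
  - unfold glue at 2; destruct (Rle_dec x a); [|lra].
    apply is_derive_ext_loc with l; [|apply Hl].
    apply (locally_interval _ x m_infty a); simpl; auto.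
    intros y _ Hy. unfold glue; destruct (Rle_dec y a); [auto|lra].
  - subst x. unfold glue at 2; destruct (Rle_dec a a); [|lra].
    apply is_derive_Reals. intros eps Heps.
    destruct (proj1 (is_derive_Reals _ _ _) (Hl a) eps Heps) as [d1 Hd1].
    destruct (proj1 (is_derive_Reals _ _ _) (Hr a) eps Heps) as [d2 Hd2].
    assert (Hd : 0 < Rmin d1 d2) by (apply Rmin_pos; apply cond_pos).
    exists (mkposreal _ Hd). intros h Hh Hhd. simpl in Hhd.
    unfold glue. destruct (Rle_dec a a); [|lra].
    destruct (Rle_dec (a + h) a).
    + apply Hd1; auto. apply Rlt_le_trans with (1 := Hhd). apply Rmin_l.
    + rewrite E0, E1. apply Hd2; auto. apply Rlt_le_trans with (1 := Hhd). apply Rmin_r.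
  - unfold glue at 2; destruct (Rle_dec x a); [lra|].
    apply is_derive_ext_loc with r; [|apply Hr].
    apply (locally_interval _ x a p_infty); simpl; auto.
    intros y Hy _. unfold glue; destruct (Rle_dec y a); [lra|auto].
Qed.

Lemma glue_cont (a : R) (l r : R -> R) :
  (forall x, continuous l x) -> (forall x, continuous r x) -> l a = r a ->
  forall x, continuous (glue a l r) x.
Proof.
  intros Hl Hr E0 x.
  destruct (Rtotal_order x a) as [Hx|[Hx|Hx]].
  - apply continuous_ext_loc with l.
    + apply (locally_interval _ x m_infty a); simpl; auto.
      intros y _ Hy. unfold glue; destruct (Rle_dec y a); [auto|lra].
    + apply Hl.
  - subst x. apply continuity_pt_filterlim. intros eps Heps.
    destruct (proj2 (continuity_pt_filterlim _ _) (Hl a) eps Heps) as [d1 [Hd1 H1]].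
    destruct (proj2 (continuity_pt_filterlim _ _) (Hr a) eps Heps) as [d2 [Hd2 H2]].
    exists (Rmin d1 d2). split. apply Rmin_pos; auto.
    intros y [_ Hy]. simpl in Hy. unfold R_dist in *.
    unfold glue. destruct (Rle_dec a a); [|lra].
    destruct (Req_dec y a) as [->|Hya].
    { destruct (Rle_dec a a); [|lra]. simpl. unfold R_dist. rewrite Rminus_diag, Rabs_R0; lra. }
    destruct (Rle_dec y a).
    + apply H1. split. unfold D_x, no_cond; auto. simpl; unfold R_dist.
      apply Rlt_le_trans with (1 := Hy). apply Rmin_l.
    + rewrite E0. apply H2. split. unfold D_x, no_cond; auto. simpl; unfold R_dist.
      apply Rlt_le_trans with (1 := Hy). apply Rmin_r.
  - apply continuous_ext_loc with r.
    + apply (locally_interval _ x a p_infty); simpl; auto.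
      intros y Hy _. unfold glue; destruct (Rle_dec y a); [lra|auto].
    + apply Hr.
Qed.

Definition pw (m r : R -> R) : R -> R := glue 0 (fun _ => 0) (glue 1 m r).
Definition P0 (s : R) := 7*s^5 - 14*s^6 + 10*s^7 - 5/2*s^8.
Definition P1 (s : R) := 35*s^4 - 84*s^5 + 70*s^6 - 20*s^7.
Definition P2 (s : R) := 140*s^3 - 420*s^4 + 420*s^5 - 140*s^6.
Definition P3 (s : R) := 420*s^2 - 1680*s^3 + 2100*s^4 - 840*s^5.
Definition P4 (s : R) := 840*s - 5040*s^2 + 8400*s^3 - 4200*s^4.
Definition Rf0 := pw P0 (fun s => s - 1/2).
Definition Rf1 := pw P1 (fun _ => 1).
Definition Rf2 := pw P2 (fun _ => 0).
Definition Rf3 := pw P3 (fun _ => 0).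
Definition Rf4 := pw P4 (fun _ => 0).

Lemma pw_derive m m' r r' :
  (forall x, is_derive m x (m' x)) -> (forall x, is_derive r x (r' x)) ->
  m 0 = 0 -> m' 0 = 0 -> m 1 = r 1 -> m' 1 = r' 1 ->
  forall x, is_derive (pw m r) x (pw m' r' x).
Proof.
  intros Hm Hr a b c d. unfold pw. apply glue_derive.
  - intros y; auto_derive; auto.
  - apply glue_derive; auto.
  - unfold glue. destruct (Rle_dec 0 1); [auto|lra].
  - unfold glue. destruct (Rle_dec 0 1); [auto|lra].
Qed.

Lemma Rf0_d x : is_derive Rf0 x (Rf1 x).
Proof. apply pw_derive; intros; unfold P0, P1; try auto_derive; auto; try ring; try field; try lra. Qed.
Lemma Rf1_d x : is_derive Rf1 x (Rf2 x).
Proof. apply pw_derive; intros; unfold P1, P2; try auto_derive; auto; try ring; try field; try lra. Qed.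
Lemma Rf2_d x : is_derive Rf2 x (Rf3 x).
Proof. apply pw_derive; intros; unfold P2, P3; try auto_derive; auto; try ring; try field; try lra. Qed.
Lemma Rf3_d x : is_derive Rf3 x (Rf4 x).
Proof. apply pw_derive; intros; unfold P3, P4; try auto_derive; auto; try ring; try field; try lra. Qed.
Lemma Rf4_c x : continuous Rf4 x.
Proof.
  unfold Rf4, pw. apply glue_cont.
  - intros; apply continuous_const.
  - apply glue_cont.
    + intros y. apply (ex_derive_continuous (K:=R_AbsRing) (V:=R_NormedModule)). unfold P4. auto_derive. auto.
    + intros; apply continuous_const.
    + unfold P4; ring.
  - unfold glue, P4. destruct (Rle_dec 0 1); [ring|lra].
Qed.

Lemma pw_left m r s : s <= 0 -> pw m r s = 0.
Proof. intros H; unfold pw, glue; destruct (Rle_dec s 0); [auto|lra]. Qed.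
Lemma pw_mid m r s : 0 <= s <= 1 -> m 0 = 0 -> pw m r s = m s.
Proof. intros H H0; unfold pw, glue; destruct (Rle_dec s 0); destruct (Rle_dec s 1); try lra.
  replace s with 0 by lra; auto. Qed.
Lemma pw_right m r s : 1 <= s -> m 1 = r 1 -> pw m r s = r s.
Proof. intros H H1; unfold pw, glue; destruct (Rle_dec s 0); destruct (Rle_dec s 1); try lra.
  replace s with 1 by lra; auto. Qed.

Lemma Rf1_left s : s <= 0 -> Rf1 s = 0. Proof. apply pw_left. Qed.
Lemma Rf0_left s : s <= 0 -> Rf0 s = 0. Proof. apply pw_left. Qed.
Lemma Rf2_left s : s <= 0 -> Rf2 s = 0. Proof. apply pw_left. Qed.
Lemma Rf3_left s : s <= 0 -> Rf3 s = 0. Proof. apply pw_left. Qed.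
Lemma Rf4_left s : s <= 0 -> Rf4 s = 0. Proof. apply pw_left. Qed.
Lemma Rf0_right s : 1 <= s -> Rf0 s = s - 1/2. Proof. intros; unfold Rf0, Rf1, Rf2, Rf3, Rf4; rewrite pw_right; auto; unfold P0; field. Qed.
Lemma Rf1_right s : 1 <= s -> Rf1 s = 1. Proof. intros; unfold Rf0, Rf1, Rf2, Rf3, Rf4; rewrite pw_right; auto; unfold P1; field. Qed.
Lemma Rf2_right s : 1 <= s -> Rf2 s = 0. Proof. intros; unfold Rf0, Rf1, Rf2, Rf3, Rf4; rewrite pw_right; auto; unfold P2; field. Qed.
Lemma Rf3_right s : 1 <= s -> Rf3 s = 0. Proof. intros; unfold Rf0, Rf1, Rf2, Rf3, Rf4; rewrite pw_right; auto; unfold P3; field. Qed.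
Lemma Rf4_right s : 1 <= s -> Rf4 s = 0. Proof. intros; unfold Rf0, Rf1, Rf2, Rf3, Rf4; rewrite pw_right; auto; unfold P4; field. Qed.

Lemma pw_cases (m r : R -> R) (Q : R -> Prop) s :
  m 0 = 0 -> m 1 = r 1 -> Q 0 -> (0 <= s <= 1 -> Q (m s)) -> (1 <= s -> Q (r s)) -> Q (pw m r s).
Proof.
  intros H0 H1 Q0 Qm Qr.
  destruct (Rle_dec s 0). rewrite pw_left; auto.
  destruct (Rle_dec s 1). rewrite pw_mid; [apply Qm; lra|lra|auto].
  rewrite pw_right; [apply Qr; lra|lra|auto].
Qed.

Lemma Rf0_ge0 s : 0 <= Rf0 s.
Proof.
  unfold Rf0; apply pw_cases; unfold P0; try lra.
  intros [H0 H1].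
  assert (0 <= (13/2) - (15/2)*s + (5/2)*s^2) by nra.
  assert (0 <= s^5) by (apply pow_le; lra).
  assert (7*s^5 - 14*s^6 + 10*s^7 - 5/2*s^8 = s^5 * ((1/2) + (1-s)*((13/2) - (15/2)*s + (5/2)*s^2))) by field.
  match goal with E: _ = _ |- _ => rewrite E end. apply Rmult_le_pos; auto. nra.
Qed.

Lemma P1_ge0 s : 0 <= s <= 1 -> 0 <= P1 s.
Proof.
  intros [H0 H1]. unfold P1.
  assert (0 <= 34 - 50*s + 20*s^2) by nra.
  assert (0 <= s^4) by (apply pow_le; lra).
  assert (35*s^4 - 84*s^5 + 70*s^6 - 20*s^7 = s^4 * (1 + (1-s)*(34 - 50*s + 20*s^2))) by ring.
  match goal with E: _ = _ |- _ => rewrite E end. apply Rmult_le_pos; auto. nra.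
Qed.

Lemma Rf1_bnd s : 0 <= Rf1 s <= 1.
Proof.
  unfold Rf1; apply pw_cases; unfold P1; try lra.
  intros Hs. split. apply (P1_ge0 s Hs).
  assert (Hs' : 0 <= 1 - s <= 1) by lra.
  generalize (P1_ge0 _ Hs'). unfold P1. intros H.
  assert (1 - (35*s^4 - 84*s^5 + 70*s^6 - 20*s^7) = 35*(1-s)^4 - 84*(1-s)^5 + 70*(1-s)^6 - 20*(1-s)^7) by ring.
  lra.
Qed.

Lemma Rf2_bnd s : Rabs (Rf2 s) <= 3.
Proof.
  unfold Rf2; apply pw_cases; unfold P2; try ring; try (rewrite Rabs_R0; lra); try (intros; rewrite Rabs_R0; lra).
  intros [H0 H1]. set (w := s*(1-s)).
  assert (0 <= w <= 1/4) by (unfold w; split; [apply Rmult_le_pos; lra | pose proof (pow2_ge_0 (s-1/2)); nra]).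
  replace (140*s^3 - 420*s^4 + 420*s^5 - 140*s^6) with (140*w^3) by (unfold w; ring).
  rewrite Rabs_pos_eq; [|nra]. nra.
Qed.

Lemma Rf3_bnd s : Rabs (Rf3 s) <= 30.
Proof.
  unfold Rf3; apply pw_cases; unfold P3; try ring; try (rewrite Rabs_R0; lra); try (intros; rewrite Rabs_R0; lra).
  intros [H0 H1]. set (w := s*(1-s)).
  assert (0 <= w <= 1/4) by (unfold w; split; [apply Rmult_le_pos; lra | pose proof (pow2_ge_0 (s-1/2)); nra]).
  replace (420*s^2 - 1680*s^3 + 2100*s^4 - 840*s^5) with (420*w^2*(1-2*s)) by (unfold w; ring).
  apply Rabs_le. assert (0 <= w^2 <= 1/16) by nra. split; nra.
Qed.

Lemma Rf4_bnd s : Rabs (Rf4 s) <= 300.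
Proof.
  unfold Rf4; apply pw_cases; unfold P4; try ring; try (rewrite Rabs_R0; lra); try (intros; rewrite Rabs_R0; lra).
  intros [H0 H1]. set (w := s*(1-s)).
  assert (0 <= w <= 1/4) by (unfold w; split; [apply Rmult_le_pos; lra | pose proof (pow2_ge_0 (s-1/2)); nra]).
  replace (840*s - 5040*s^2 + 8400*s^3 - 4200*s^4) with (840*w*(1-5*w)) by (unfold w; ring).
  apply Rabs_le. split; nra.
Qed.

Lemma DRf0 x : Derive (fun y => Rf0 y) x = Rf1 x. Proof. apply is_derive_unique, Rf0_d. Qed.
Lemma DRf1 x : Derive (fun y => Rf1 y) x = Rf2 x. Proof. apply is_derive_unique, Rf1_d. Qed.
Lemma DRf2 x : Derive (fun y => Rf2 y) x = Rf3 x. Proof. apply is_derive_unique, Rf2_d. Qed.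
Lemma DRf3 x : Derive (fun y => Rf3 y) x = Rf4 x. Proof. apply is_derive_unique, Rf3_d. Qed.
Lemma ERf0 x : ex_derive (fun y => Rf0 y) x. Proof. eexists; apply Rf0_d. Qed.
Lemma ERf1 x : ex_derive (fun y => Rf1 y) x. Proof. eexists; apply Rf1_d. Qed.
Lemma ERf2 x : ex_derive (fun y => Rf2 y) x. Proof. eexists; apply Rf2_d. Qed.
Lemma ERf3 x : ex_derive (fun y => Rf3 y) x. Proof. eexists; apply Rf3_d. Qed.
Global Hint Resolve ERf0 ERf1 ERf2 ERf3 : core.

Definition Phi k t := k * (t + Rf0 (t - 3)).
Definition Phi1 k t := k * (1 + Rf1 (t - 3)).
Definition Phi2 k t := k * Rf2 (t - 3).
Definition Phi3 k t := k * Rf3 (t - 3).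
Definition th t := PI/2 * Rf1 (t - 2).
Definition th1 t := PI/2 * Rf2 (t - 2).
Definition th2 t := PI/2 * Rf3 (t - 2).
Definition th3 t := PI/2 * Rf4 (t - 2).

Ltac dfin := repeat (match goal with |- _ /\ _ => split end); auto; rewrite ?DRf0, ?DRf1, ?DRf2, ?DRf3; unfold Rminus; try ring.

Lemma Phi_d k t : is_derive (Phi k) t (Phi1 k t).
Proof. unfold Phi, Phi1. auto_derive; dfin. Qed.

Definition FF a k t := a * exp (- Phi k t) * cos (th t).
Definition GG a k t := a * exp (- Phi k t) * sin (th t).
Definition FF1 a k t := a * exp (- Phi k t) * (- Phi1 k t * cos (th t) - th1 t * sin (th t)).
Definition GG1 a k t := a * exp (- Phi k t) * (- Phi1 k t * sin (th t) + th1 t * cos (th t)).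
Definition EE k t := Phi1 k t ^ 2 - th1 t ^ 2 - Phi2 k t.
Definition FC k t := th2 t - 2 * Phi1 k t * th1 t.
Definition FF2 a k t := a * exp (- Phi k t) * (EE k t * cos (th t) - FC k t * sin (th t)).
Definition GG2 a k t := a * exp (- Phi k t) * (EE k t * sin (th t) + FC k t * cos (th t)).
Definition pp k t := 1 - th1 t ^ 2 / k ^ 2.
Definition qq k t := 1 - 3/4 * Rf1 (t - 1) + (EE k t / k ^ 2 - 1) / 4.
Definition al k t := FC k t / k.
Definition pp1 k t := - 2 * th1 t * th2 t / k ^ 2.
Definition qq1 k t := - 3/4 * Rf2 (t - 1) + (2 * Phi1 k t * Phi2 k t - 2 * th1 t * th2 t - Phi3 k t) / (4 * k ^ 2).
Definition al1 k t := (th3 t - 2 * (Phi2 k t * th1 t + Phi1 k t * th2 t)) / k.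

Ltac ud := unfold FF, GG, FF1, GG1, FF2, GG2, pp, qq, al, pp1, qq1, al1; unfold EE, FC; unfold Phi, Phi1, Phi2, Phi3, th, th1, th2, th3.

Lemma FF_d a k t : is_derive (FF a k) t (FF1 a k t).
Proof. ud; auto_derive; dfin. Qed.
Lemma GG_d a k t : is_derive (GG a k) t (GG1 a k t).
Proof. ud; auto_derive; dfin. Qed.
Lemma FF1_d a k t : is_derive (FF1 a k) t (FF2 a k t).
Proof. ud; auto_derive; dfin. Qed.
Lemma GG1_d a k t : is_derive (GG1 a k) t (GG2 a k t).
Proof. ud; auto_derive; dfin. Qed.
Lemma pp_d k t : k <> 0 -> is_derive (pp k) t (pp1 k t).
Proof. intros; ud; auto_derive; dfin; field; auto. Qed.
Lemma qq_d k t : k <> 0 -> is_derive (qq k) t (qq1 k t).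
Proof. intros; ud; auto_derive; dfin; field; auto. Qed.
Lemma al_d k t : k <> 0 -> is_derive (al k) t (al1 k t).
Proof. intros; ud; auto_derive; dfin; field; auto. Qed.

Lemma th_left t : t <= 2 -> th t = 0.
Proof. intros; unfold th; rewrite Rf1_left; [ring|lra]. Qed.
Lemma th_right t : 3 <= t -> th t = PI/2.
Proof. intros; unfold th; rewrite Rf1_right; [ring|lra]. Qed.

Lemma FF_ode a k t : k <> 0 -> FF2 a k t = k^2 * pp k t * FF a k t - k * al k t * GG a k t.
Proof.
  intros Hk. destruct (Rle_dec t 3).
  - unfold FF2, FF, GG, pp, al, EE, Phi1, Phi2. rewrite Rf1_left, Rf2_left by lra. field. auto.
  - unfold FF2, FF, GG, pp, al. rewrite th_right by lra. rewrite cos_PI2. field. auto.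
Qed.

Lemma GG_ode a k t : k <> 0 -> GG2 a k t = 4 * k^2 * qq k t * GG a k t + k * al k t * FF a k t.
Proof.
  intros Hk. destruct (Rle_dec t 2).
  - unfold GG2, FF, GG, qq, al. rewrite th_left by lra. rewrite sin_0. field. auto.
  - unfold GG2, FF, GG, qq, al. rewrite Rf1_right by lra. field. auto.
Qed.

Lemma win_start a k t : k <> 0 -> t <= 1 ->
  FF a k t = a * exp (- (k * t)) /\ GG a k t = 0 /\ pp k t = 1 /\ qq k t = 1 /\ al k t = 0.
Proof.
  intros Hk Ht. ud. repeat first [rewrite Rf0_left by lra | rewrite Rf1_left by lra | rewrite Rf2_left by lra | rewrite Rf3_left by lra].
  replace (PI/2*0) with 0 by ring. rewrite cos_0, sin_0.
  repeat split; try field; auto. rewrite Rplus_0_r; ring.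
Qed.

Lemma win_end a k t : k <> 0 -> 4 <= t ->
  FF a k t = 0 /\ GG a k t = a * exp (- (k * (2 * t - 7/2))) /\ pp k t = 1 /\ qq k t = 1 /\ al k t = 0.
Proof.
  intros Hk Ht. ud.
  repeat first [rewrite Rf0_right by lra | rewrite Rf1_right by lra | rewrite Rf2_right by lra | rewrite Rf3_right by lra].
  replace (PI/2*1) with (PI/2) by ring. rewrite cos_PI2, sin_PI2.
  repeat split; try field; auto.
  replace (k * (t + (t - 3 - 1 / 2))) with (k * (2 * t - 7 / 2)) by field. ring.
Qed.

Lemma abs_mul_le x y a b : Rabs x <= a -> Rabs y <= b -> Rabs (x * y) <= a * b.
Proof. intros; rewrite Rabs_mult; apply Rmult_le_compat; auto; apply Rabs_pos. Qed.
Lemma abs_add_le x y a b : Rabs x <= a -> Rabs y <= b -> Rabs (x + y) <= a + b.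
Proof. intros; eapply Rle_trans; [apply Rabs_triang|lra]. Qed.
Lemma abs_sub_le x y a b : Rabs x <= a -> Rabs y <= b -> Rabs (x - y) <= a + b.
Proof. intros; eapply Rle_trans; [apply Rabs_triang|]. rewrite Rabs_Ropp; lra. Qed.
Lemma abs_cos x : Rabs (cos x) <= 1. Proof. apply Rabs_le; apply COS_bound. Qed.
Lemma abs_sin x : Rabs (sin x) <= 1. Proof. apply Rabs_le; apply SIN_bound. Qed.
Lemma PI2_le2 : 0 <= PI / 2 <= 2.
Proof. generalize PI_4 PI_RGT_0; intros; split; lra. Qed.
Lemma abs_PI2 : Rabs (PI/2) <= 2.
Proof. generalize PI2_le2; intros; rewrite Rabs_pos_eq; lra. Qed.

Lemma exp_le_m x y : x <= y -> exp x <= exp y.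
Proof. intros [H|H]; [left; apply exp_increasing; auto|subst; lra]. Qed.

Lemma bnd_th1 t : Rabs (th1 t) <= 6.
Proof. unfold th1. replace 6 with (2*3) by ring. apply abs_mul_le. apply abs_PI2. apply Rf2_bnd. Qed.
Lemma bnd_th2 t : Rabs (th2 t) <= 60.
Proof. unfold th2. replace 60 with (2*30) by ring. apply abs_mul_le. apply abs_PI2. apply Rf3_bnd. Qed.
Lemma bnd_th3 t : Rabs (th3 t) <= 600.
Proof. unfold th3. replace 600 with (2*300) by ring. apply abs_mul_le. apply abs_PI2. apply Rf4_bnd. Qed.

Lemma bnd_Phi1 k t : 0 < k -> k <= Phi1 k t <= 2 * k.
Proof. intros; unfold Phi1; generalize (Rf1_bnd (t-3)); intros; split; nra. Qed.
Lemma bnd_Phi2 k t : 0 < k -> Rabs (Phi2 k t) <= 3 * k.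
Proof. intros; unfold Phi2; rewrite Rmult_comm. apply abs_mul_le; [apply Rf2_bnd|rewrite Rabs_pos_eq; lra]. Qed.
Lemma bnd_Phi3 k t : 0 < k -> Rabs (Phi3 k t) <= 30 * k.
Proof. intros; unfold Phi3; rewrite Rmult_comm. apply abs_mul_le; [apply Rf3_bnd|rewrite Rabs_pos_eq; lra]. Qed.
Lemma Phi_ge k t : 0 < k -> k * t <= Phi k t.
Proof. intros; unfold Phi; generalize (Rf0_ge0 (t-3)); intros; nra. Qed.
Lemma exp_Phi k t : 0 < k -> exp (- Phi k t) <= exp (- (k * t)).
Proof. intros; generalize (Phi_ge k t H); intros; apply exp_le_m; lra. Qed.

Lemma abs_le_b x b : Rabs x <= b -> - b <= x <= b.
Proof. intros; split; [apply Ropp_le_cancel; rewrite Ropp_involutive; eapply Rle_trans; [|apply H]; rewrite <- Rabs_Ropp; apply RRle_abs|eapply Rle_trans; [apply RRle_abs|auto]]. Qed.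

Lemma abs_b x b : - b <= x <= b -> Rabs x <= b.
Proof. intros; apply Rabs_le; lra. Qed.

Lemma bnd_coef k t : 1000 <= k ->
  99/100 <= pp k t <= 1 /\ 1/5 <= qq k t <= 2 /\ Rabs (al k t) <= 25 /\
  Rabs (pp1 k t) <= 1 /\ Rabs (qq1 k t) <= 6 /\ Rabs (al1 k t) <= 300.
Proof.
  intros Hk. assert (Hk0 : k <> 0) by lra.
  set (w := / k).
  assert (Hw : 0 < w <= 1/1000). { unfold w. split. apply Rinv_0_lt_compat; lra.
    replace (1/1000) with (/1000) by field. apply Rinv_le_contravar; lra. }
  assert (Ew : k * w = 1) by (unfold w; field; auto).
  generalize (bnd_th1 t) (bnd_th2 t) (bnd_th3 t); intros B1 B2 B3.
  generalize (Rf1_bnd (t-3)) (Rf1_bnd (t-1)) (Rf2_bnd (t-3)) (Rf2_bnd (t-1)) (Rf3_bnd (t-3)); intros R1 R1' R2 R2' R3.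
  set (u1 := th1 t) in *. set (u2 := th2 t) in *. set (u3 := th3 t) in *.
  set (r1 := Rf1 (t - 3)) in *. set (r2 := Rf2 (t-3)) in *. set (r3 := Rf3 (t-3)) in *.
  assert (Epp : pp k t = 1 - (u1 * w)^2) by (unfold pp, u1, w; field; auto).
  assert (Eqq : qq k t = 1 - 3/4 * Rf1 (t-1) + ((1 + r1)^2 - (u1*w)^2 - r2 * w - 1) / 4)
    by (unfold qq, EE, Phi1, Phi2, u1, r1, r2, w; field; auto).
  assert (Eal : al k t = u2 * w - 2 * (1 + r1) * u1)
    by (unfold al, FC, Phi1, u1, u2, r1, w; field; auto).
  assert (Epp1 : pp1 k t = - 2 * (u1 * w) * (u2 * w))
    by (unfold pp1, u1, u2, w; field; auto).
  assert (Eqq1 : qq1 k t = - 3/4 * Rf2 (t - 1) + (2 * (1 + r1) * r2 - 2 * (u1 * w) * (u2 * w) - r3 * w) / 4)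
    by (unfold qq1, Phi1, Phi2, Phi3, u1, u2, r1, r2, r3, w; field; auto).
  assert (Eal1 : al1 k t = u3 * w - 2 * (r2 * u1 + (1 + r1) * u2))
    by (unfold al1, Phi1, Phi2, u1, u2, u3, r1, r2, w; field; auto).
  assert (Hu1w : Rabs (u1 * w) <= 6/1000).
  { rewrite Rabs_mult, (Rabs_pos_eq w) by lra. generalize (Rabs_pos u1); nra. }
  assert (Hu2w : Rabs (u2 * w) <= 60/1000).
  { rewrite Rabs_mult, (Rabs_pos_eq w) by lra. generalize (Rabs_pos u2); nra. }
  apply abs_le_b in B1, B2, B3, R2, R2', R3.
  apply abs_le_b in Hu1w, Hu2w.
  rewrite Epp, Eqq, Eal, Epp1, Eqq1, Eal1.
  repeat split; try apply abs_b; try split; try nra.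
Qed.

Lemma bnd_FG a k t : 1000 <= k ->
  let B := Rabs a * exp (- (k * t)) * (6 * k ^ 2) in
  Rabs (FF a k t) <= B /\ Rabs (GG a k t) <= B /\ Rabs (FF1 a k t) <= B /\
  Rabs (GG1 a k t) <= B /\ Rabs (FF2 a k t) <= B /\ Rabs (GG2 a k t) <= B.
Proof.
  intros Hk B.
  assert (HE : 0 < exp (- Phi k t) <= exp (- (k * t))) by (split; [apply exp_pos|apply exp_Phi; lra]).
  assert (G : forall X, Rabs X <= 6 * k^2 -> Rabs (a * exp (- Phi k t) * X) <= B).
  { intros X HX. unfold B. rewrite !Rabs_mult, (Rabs_pos_eq (exp _)) by lra.
    generalize (Rabs_pos a) (Rabs_pos X); intros.
    apply Rmult_le_compat; [apply Rmult_le_pos; lra | lra | | auto].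
    apply Rmult_le_compat_l; lra. }
  generalize (bnd_th1 t) (bnd_th2 t) (bnd_Phi1 k t) (bnd_Phi2 k t); intros B1 B2 P1 P2.
  assert (0 < k) by lra.
  specialize (P1 H). specialize (P2 H).
  generalize (abs_cos (th t)) (abs_sin (th t)); intros C S.
  assert (Hk2 : 1000 * k <= k^2) by nra.
  assert (HP1 : Rabs (Phi1 k t) <= 2 * k) by (apply abs_b; lra).
  assert (HX1 : Rabs (- Phi1 k t * cos (th t) - th1 t * sin (th t)) <= 6 * k^2).
  { eapply Rle_trans. apply abs_sub_le. rewrite <- Ropp_mult_distr_l. rewrite Rabs_Ropp.
    apply abs_mul_le. apply HP1. apply C. apply abs_mul_le. apply B1. apply S. nra. }
  assert (HX1' : Rabs (- Phi1 k t * sin (th t) + th1 t * cos (th t)) <= 6 * k^2).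
  { eapply Rle_trans. apply abs_add_le. rewrite <- Ropp_mult_distr_l. rewrite Rabs_Ropp.
    apply abs_mul_le. apply HP1. apply S. apply abs_mul_le. apply B1. apply C. nra. }
  assert (HEE : Rabs (EE k t) <= 4 * k^2 + 36 + 3 * k).
  { unfold EE. replace (Phi1 k t ^ 2) with (Phi1 k t * Phi1 k t) by ring.
    replace (th1 t ^ 2) with (th1 t * th1 t) by ring.
    replace (4 * k^2 + 36 + 3 * k) with ((2*k)*(2*k) + 6 * 6 + 3 * k) by ring.
    apply abs_sub_le; [apply abs_sub_le|auto]; apply abs_mul_le; auto. }
  assert (HFC : Rabs (FC k t) <= 60 + 24 * k).
  { unfold FC. eapply Rle_trans. apply abs_sub_le. apply B2.
    rewrite Rmult_assoc. apply abs_mul_le. rewrite Rabs_pos_eq by lra. apply Rle_refl.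
    apply abs_mul_le. apply HP1. apply B1. nra. }
  assert (HX2 : Rabs (EE k t * cos (th t) - FC k t * sin (th t)) <= 6 * k^2).
  { eapply Rle_trans. apply abs_sub_le; apply abs_mul_le; eauto. nra. }
  assert (HX2' : Rabs (EE k t * sin (th t) + FC k t * cos (th t)) <= 6 * k^2).
  { eapply Rle_trans. apply abs_add_le; apply abs_mul_le; eauto. nra. }
  unfold FF, GG, FF1, GG1, FF2, GG2.
  repeat split; apply G; auto; nra.
Qed.

Definition c3 (f : fun3) x y t :=
  continuous (fun p : R * R * R => f (fst (fst p)) (snd (fst p)) (snd p)) (x, y, t).

Lemma c3_cont3 f x y t : c3 f x y t -> cont3 f x y t.
Proof.
  intros H eps Heps.
  destruct (proj1 (filterlim_locally _ _) H (mkposreal _ Heps)) as [d Hd].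
  exists d. split. apply cond_pos.
  intros x' y' t' Hx Hy Ht. apply (Hd (x', y', t')).
  repeat split; simpl; auto.
Qed.

Lemma c3_plus f g x y t : c3 f x y t -> c3 g x y t -> c3 (fun x y t => f x y t + g x y t) x y t.
Proof. intros; apply (continuous_plus (fun p : R*R*R => f _ _ _) (fun p : R*R*R => g _ _ _)); auto. Qed.
Lemma c3_mult f g x y t : c3 f x y t -> c3 g x y t -> c3 (fun x y t => f x y t * g x y t) x y t.
Proof. intros; apply (continuous_mult (fun p : R*R*R => f _ _ _) (fun p : R*R*R => g _ _ _)); auto. Qed.
Lemma c3_opp f x y t : c3 f x y t -> c3 (fun x y t => - f x y t) x y t.
Proof. intros; apply (continuous_opp (fun p : R*R*R => f _ _ _)); auto. Qed.
Lemma c3_minus f g x y t : c3 f x y t -> c3 g x y t -> c3 (fun x y t => f x y t - g x y t) x y t.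
Proof. intros; apply c3_plus; auto; apply c3_opp; auto. Qed.
Lemma c3_const c x y t : c3 (fun _ _ _ => c) x y t.
Proof. apply continuous_const. Qed.
Lemma c3_t (h : R -> R) x y t : continuous h t -> c3 (fun _ _ t => h t) x y t.
Proof. intros H. apply (continuous_comp (fun p : R*R*R => snd p) h); auto. apply continuous_snd. Qed.
Lemma c3_x (h : R -> R) x y t : continuous h x -> c3 (fun x _ _ => h x) x y t.
Proof. intros H. apply (continuous_comp (fun p : R*R*R => fst (fst p)) h); auto.
  apply (continuous_comp (fun p : R*R*R => fst p) fst). apply continuous_fst. apply continuous_fst. Qed.
Lemma c3_y (h : R -> R) x y t : continuous h y -> c3 (fun _ y _ => h y) x y t.
Proof. intros H. apply (continuous_comp (fun p : R*R*R => snd (fst p)) h); auto.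
  apply (continuous_comp (fun p : R*R*R => fst p) snd). apply continuous_fst. apply continuous_snd. Qed.

Definition isd (d : dir) (f : fun3) x y t l : Prop :=
  match d with
  | DX => is_derive (fun s => f s y t) x l
  | DY => is_derive (fun s => f x s t) y l
  | DT => is_derive (fun s => f x y s) t l
  end.

Lemma isd_pdex d f x y t l : isd d f x y t l -> pdex d f x y t.
Proof. destruct d; simpl; intros H; eexists; eauto. Qed.
Lemma isd_pd d f x y t l : isd d f x y t l -> pd d f x y t = l.
Proof. destruct d; simpl; intros H; apply is_derive_unique; auto. Qed.
Lemma pd_fun d f g : (forall x y t, isd d f x y t (g x y t)) -> pd d f = g.
Proof. intros H; apply functional_extensionality; intro x; apply functional_extensionality; intro y;
  apply functional_extensionality; intro t; apply isd_pd; auto. Qed.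

Definition Ug (f g : R -> R) (k : R) : fun3 := fun x y t => f t * cos (k * x) + g t * cos (2 * k * y).

Definition Ugd (f g f1 g1 : R -> R) k (d : dir) : fun3 :=
  match d with
  | DX => fun x y t => f t * (- (k * sin (k * x)))
  | DY => fun x y t => g t * (- (2 * k * sin (2 * k * y)))
  | DT => fun x y t => f1 t * cos (k * x) + g1 t * cos (2 * k * y)
  end.

Definition Ugdd (f g f1 g1 f2 g2 : R -> R) k (d1 d2 : dir) : fun3 :=
  match d1, d2 with
  | DX, DX => fun x y t => f t * (- (k * k * cos (k * x)))
  | DX, DY => fun x y t => 0
  | DX, DT => fun x y t => f1 t * (- (k * sin (k * x)))
  | DY, DX => fun x y t => 0
  | DY, DY => fun x y t => g t * (- (4 * k * k * cos (2 * k * y)))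
  | DY, DT => fun x y t => g1 t * (- (2 * k * sin (2 * k * y)))
  | DT, DX => fun x y t => f1 t * (- (k * sin (k * x)))
  | DT, DY => fun x y t => g1 t * (- (2 * k * sin (2 * k * y)))
  | DT, DT => fun x y t => f2 t * cos (k * x) + g2 t * cos (2 * k * y)
  end.

Lemma Deta (f f1 : R -> R) t : (forall t, is_derive f t (f1 t)) -> Derive (fun y => f y) t = f1 t.
Proof. intros H; apply is_derive_unique, H. Qed.
Lemma Eeta (f f1 : R -> R) t : (forall t, is_derive f t (f1 t)) -> ex_derive (fun y => f y) t.
Proof. intros H; eexists; apply H. Qed.

Lemma Ug_isd f g f1 g1 k d x y t :
  (forall t, is_derive f t (f1 t)) -> (forall t, is_derive g t (g1 t)) ->
  isd d (Ug f g k) x y t (Ugd f g f1 g1 k d x y t).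
Proof.
  intros Hf Hg. destruct d; simpl; unfold Ug.
  - auto_derive; auto; ring.
  - auto_derive; auto; ring.
  - auto_derive. repeat split; try apply (Eeta _ _ _ Hf); try apply (Eeta _ _ _ Hg).
    rewrite (Deta _ _ _ Hf), (Deta _ _ _ Hg). ring.
Qed.

Ltac dtac Hf Hg Hf1 Hg1 :=
  auto_derive; repeat split; try apply (Eeta _ _ _ Hf); try apply (Eeta _ _ _ Hg);
  try apply (Eeta _ _ _ Hf1); try apply (Eeta _ _ _ Hg1);
  rewrite ?(Deta _ _ _ Hf), ?(Deta _ _ _ Hg), ?(Deta _ _ _ Hf1), ?(Deta _ _ _ Hg1); ring.

Lemma Ugd_isd f g f1 g1 f2 g2 k d1 d2 x y t :
  (forall t, is_derive f t (f1 t)) -> (forall t, is_derive g t (g1 t)) ->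
  (forall t, is_derive f1 t (f2 t)) -> (forall t, is_derive g1 t (g2 t)) ->
  isd d2 (Ugd f g f1 g1 k d1) x y t (Ugdd f g f1 g1 f2 g2 k d1 d2 x y t).
Proof.
  intros Hf Hg Hf1 Hg1. destruct d1, d2; simpl; dtac Hf Hg Hf1 Hg1.
Qed.

Definition Ag (p q al : R -> R) (k : R) : matfun := fun i j =>
  match i, j with
  | CX, CX => fun x y t => p t + al t / k * (cos (k * x) * cos (2 * k * y))
  | CX, CY => fun x y t => - (al t / k) * (sin (k * x) * sin (2 * k * y))
  | CY, CX => fun x y t => al t / k * (sin (k * x) * sin (2 * k * y))
  | CY, CY => fun x y t => q t - al t / (4 * k) * (cos (k * x) * cos (2 * k * y))
  end.

Definition Agd (p q al p1 q1 al1 : R -> R) (k : R) (i j : coord) (d : dir) : fun3 :=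
  match i, j, d with
  | CX, CX, DX => fun x y t => - al t * (sin (k * x) * cos (2 * k * y))
  | CX, CX, DY => fun x y t => - 2 * al t * (cos (k * x) * sin (2 * k * y))
  | CX, CX, DT => fun x y t => p1 t + al1 t / k * (cos (k * x) * cos (2 * k * y))
  | CX, CY, DX => fun x y t => - al t * (cos (k * x) * sin (2 * k * y))
  | CX, CY, DY => fun x y t => - 2 * al t * (sin (k * x) * cos (2 * k * y))
  | CX, CY, DT => fun x y t => - (al1 t / k) * (sin (k * x) * sin (2 * k * y))
  | CY, CX, DX => fun x y t => al t * (cos (k * x) * sin (2 * k * y))
  | CY, CX, DY => fun x y t => 2 * al t * (sin (k * x) * cos (2 * k * y))
  | CY, CX, DT => fun x y t => al1 t / k * (sin (k * x) * sin (2 * k * y))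
  | CY, CY, DX => fun x y t => al t / 4 * (sin (k * x) * cos (2 * k * y))
  | CY, CY, DY => fun x y t => al t / 2 * (cos (k * x) * sin (2 * k * y))
  | CY, CY, DT => fun x y t => q1 t - al1 t / (4 * k) * (cos (k * x) * cos (2 * k * y))
  end.

Lemma Ag_isd p q al p1 q1 al1 k i j d x y t : k <> 0 ->
  (forall t, is_derive p t (p1 t)) -> (forall t, is_derive q t (q1 t)) -> (forall t, is_derive al t (al1 t)) ->
  isd d (Ag p q al k i j) x y t (Agd p q al p1 q1 al1 k i j d x y t).
Proof.
  intros Hk Hp Hq Ha. destruct i, j, d; simpl;
  (auto_derive; repeat split; try apply (Eeta _ _ _ Hp); try apply (Eeta _ _ _ Hq);
  try apply (Eeta _ _ _ Ha); try (intro; lra);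
  rewrite ?(Deta _ _ _ Hp), ?(Deta _ _ _ Hq), ?(Deta _ _ _ Ha); field; auto).
Qed.

Definition pde_expr (A : matfun) (u : fun3) x y t :=
  pd DT (pd DT u) x y t + coord_sum (fun i => coord_sum (fun j =>
        pd (dir_of i) (fun x' y' t' => A i j x' y' t' * pd (dir_of j) u x' y' t') x y t)).

Lemma Ug_pd f g f1 g1 k d :
  (forall t, is_derive f t (f1 t)) -> (forall t, is_derive g t (g1 t)) ->
  pd d (Ug f g k) = Ugd f g f1 g1 k d.
Proof. intros; apply pd_fun; intros; apply Ug_isd; auto. Qed.
Lemma Ugd_pd f g f1 g1 f2 g2 k d1 d2 :
  (forall t, is_derive f t (f1 t)) -> (forall t, is_derive g t (g1 t)) ->
  (forall t, is_derive f1 t (f2 t)) -> (forall t, is_derive g1 t (g2 t)) ->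
  pd d2 (Ugd f g f1 g1 k d1) = Ugdd f g f1 g1 f2 g2 k d1 d2.
Proof. intros; apply pd_fun; intros; apply Ugd_isd; auto. Qed.

Ltac dcomp := match goal with |- context [Derive ?F ?X] =>
  erewrite (is_derive_unique F X); [| auto_derive; [repeat split; auto | reflexivity]] end.

Lemma Ug_pde f g f1 g1 f2 g2 p q al k x y t :
  k <> 0 ->
  (forall t, is_derive f t (f1 t)) -> (forall t, is_derive g t (g1 t)) ->
  (forall t, is_derive f1 t (f2 t)) -> (forall t, is_derive g1 t (g2 t)) ->
  f2 t = k^2 * p t * f t - k * al t * g t ->
  g2 t = 4 * k^2 * q t * g t + k * al t * f t ->
  pde_expr (Ag p q al k) (Ug f g k) x y t = 0.
Proof.
  intros Hk Hf Hg Hf1 Hg1 Ef Eg. unfold pde_expr.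
  unfold coord_sum; cbn [dir_of].
  rewrite (Ug_pd f g f1 g1 k DX), (Ug_pd f g f1 g1 k DY), (Ug_pd f g f1 g1 k DT) by auto.
  rewrite (Ugd_pd f g f1 g1 f2 g2) by auto.
  cbn [Ag Ugd Ugdd]. unfold pd.
  repeat dcomp.
  rewrite Ef, Eg.
  transitivity (- al t * f t * k * cos (2*k*y) * (Rsqr (sin (k*x)) + Rsqr (cos (k*x)) - 1)
                + al t * g t * k * cos (k*x) * (Rsqr (sin (2*k*y)) + Rsqr (cos (2*k*y)) - 1)).
  unfold Rsqr; field; auto.
  rewrite !sin2_cos2. ring.
Qed.

Definition goodU (u : fun3) (M : R) x y t : Prop :=
  (forall d, pdex d u x y t) /\ (forall d1 d2, pdex d2 (pd d1 u) x y t) /\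
  cont3 u x y t /\ (forall d, cont3 (pd d u) x y t) /\
  (forall d1 d2, cont3 (pd d2 (pd d1 u)) x y t) /\
  Rabs (u x y t) <= M /\ (forall d, Rabs (pd d u x y t) <= M) /\
  (forall d1 d2, Rabs (pd d2 (pd d1 u) x y t) <= M).

Definition goodA (A : matfun) x y t : Prop :=
  forall i j, cont3 (A i j) x y t /\
    forall d, pdex d (A i j) x y t /\ cont3 (pd d (A i j)) x y t /\ Rabs (pd d (A i j) x y t) <= 60.

Definition ellA (A : matfun) x y t : Prop :=
  forall xi : coord -> R, / 80 * sqnorm xi <= quadform A x y t xi /\ quadform A x y t xi <= 80 * sqnorm xi.

Lemma cont_cos k x : continuous (fun x => cos (k * x)) x.
Proof. apply (ex_derive_continuous (K:=R_AbsRing) (V:=R_NormedModule)). auto_derive. auto. Qed.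
Lemma cont_sin k x : continuous (fun x => sin (k * x)) x.
Proof. apply (ex_derive_continuous (K:=R_AbsRing) (V:=R_NormedModule)). auto_derive. auto. Qed.
Lemma cont_of_d (f f1 : R -> R) t : (forall t, is_derive f t (f1 t)) -> continuous f t.
Proof. intros H. apply (ex_derive_continuous (K:=R_AbsRing) (V:=R_NormedModule)). eexists; apply H. Qed.

Ltac ctac1 := match goal with
| |- c3 (fun x y t => ?c) _ _ _ => apply c3_const
| |- c3 (fun x y t => @?A x y t + @?B x y t) _ _ _ => apply (c3_plus A B)
| |- c3 (fun x y t => @?A x y t * @?B x y t) _ _ _ => apply (c3_mult A B)
| |- c3 (fun x y t => - @?A x y t) _ _ _ => apply (c3_opp A)
| |- c3 (fun x y t => cos (?k * x)) _ _ _ => apply (c3_x (fun x => cos (k * x))); apply cont_cos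
| |- c3 (fun x y t => sin (?k * x)) _ _ _ => apply (c3_x (fun x => sin (k * x))); apply cont_sin
| |- c3 (fun x y t => cos (?k * y)) _ _ _ => apply (c3_y (fun x => cos (k * x))); apply cont_cos
| |- c3 (fun x y t => sin (?k * y)) _ _ _ => apply (c3_y (fun x => sin (k * x))); apply cont_sin
| |- c3 (fun x y t => ?h t) _ _ _ => apply (c3_t h)
end.
Ltac ctac := unfold Rdiv, Rminus; repeat ctac1.

Lemma Ug_good f g f1 g1 f2 g2 k x y t B :
  1 <= k ->
  (forall t, is_derive f t (f1 t)) -> (forall t, is_derive g t (g1 t)) ->
  (forall t, is_derive f1 t (f2 t)) -> (forall t, is_derive g1 t (g2 t)) ->
  (forall t, continuous f2 t) -> (forall t, continuous g2 t) ->
  Rabs (f t) <= B -> Rabs (g t) <= B -> Rabs (f1 t) <= B -> Rabs (g1 t) <= B ->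
  Rabs (f2 t) <= B -> Rabs (g2 t) <= B ->
  goodU (Ug f g k) (8 * k^2 * B) x y t.
Proof.
  intros Hk Hf Hg Hf1 Hg1 Cf2 Cg2 B0 B1 B2 B3 B4 B5.
  assert (Cf : forall t, continuous f t) by (intro; apply (cont_of_d _ _ _ Hf)).
  assert (Cg : forall t, continuous g t) by (intro; apply (cont_of_d _ _ _ Hg)).
  assert (Cf1 : forall t, continuous f1 t) by (intro; apply (cont_of_d _ _ _ Hf1)).
  assert (Cg1 : forall t, continuous g1 t) by (intro; apply (cont_of_d _ _ _ Hg1)).
  assert (HB : 0 <= B) by (generalize (Rabs_pos (f t)); lra).
  assert (Hk2 : 1 <= k^2) by nra.
  generalize (abs_cos (k*x)) (abs_sin (k*x)) (abs_cos (2*k*y)) (abs_sin (2*k*y)); intros c1 s1 c2 s2.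
  assert (Hk0 : Rabs k = k) by (apply Rabs_pos_eq; lra).
  assert (Hk1 : Rabs (2*k) = 2*k) by (apply Rabs_pos_eq; lra).
  assert (Hkk : k <= k^2) by nra.
  assert (F1 : 2 * B <= 8 * k^2 * B) by nra.
  assert (F2 : B * k <= 8 * k^2 * B) by nra.
  assert (F3 : B * (2 * k) <= 8 * k^2 * B) by nra.
  assert (F4 : B * (4 * k * k) <= 8 * k^2 * B) by nra.
  assert (M2 : forall a b A C, Rabs a <= A -> Rabs b <= C -> Rabs (a * b) <= A * C) by (intros; apply abs_mul_le; auto).
  split; [|split; [|split; [|split; [|split; [|split; [|split]]]]]].
  - intros d; eapply isd_pdex; apply Ug_isd; auto.
  - intros d1 d2. rewrite (Ug_pd f g f1 g1) by auto. eapply isd_pdex; apply Ugd_isd; eauto.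
  - apply c3_cont3. unfold Ug; ctac; auto.
  - intros d. rewrite (Ug_pd f g f1 g1) by auto. apply c3_cont3. destruct d; simpl; ctac; auto.
  - intros d1 d2. rewrite (Ug_pd f g f1 g1) by auto. rewrite (Ugd_pd f g f1 g1 f2 g2) by auto.
    apply c3_cont3. destruct d1, d2; simpl; ctac; auto.
  - unfold Ug. apply Rle_trans with (B * 1 + B * 1). apply abs_add_le; apply abs_mul_le; auto. lra.
  - intros d. rewrite (Ug_pd f g f1 g1) by auto. destruct d; simpl.
    + eapply Rle_trans; [|apply F2]. apply M2; auto. rewrite Rabs_Ropp, Rabs_mult, Hk0. generalize (Rabs_pos (sin (k*x))); nra.
    + eapply Rle_trans; [|apply F3]. apply M2; auto. rewrite Rabs_Ropp, Rabs_mult, Hk1. generalize (Rabs_pos (sin (2*k*y))); nra.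
    + apply Rle_trans with (B * 1 + B * 1). apply abs_add_le; apply abs_mul_le; auto. lra.
  - intros d1 d2. rewrite (Ug_pd f g f1 g1) by auto. rewrite (Ugd_pd f g f1 g1 f2 g2) by auto.
    destruct d1, d2; simpl; try (rewrite Rabs_R0; nra).
    + eapply Rle_trans; [|apply F4]. apply M2; auto. rewrite Rabs_Ropp, !Rabs_mult, Hk0. generalize (Rabs_pos (cos (k*x))); nra.
    + eapply Rle_trans; [|apply F2]. apply M2; auto. rewrite Rabs_Ropp, Rabs_mult, Hk0. generalize (Rabs_pos (sin (k*x))); nra.
    + eapply Rle_trans; [|apply F4]. apply M2; auto. rewrite Rabs_Ropp, !Rabs_mult, Hk0, (Rabs_pos_eq 4) by lra. generalize (Rabs_pos (cos (2*k*y))); nra.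
    + eapply Rle_trans; [|apply F3]. apply M2; auto. rewrite Rabs_Ropp, Rabs_mult, Hk1. generalize (Rabs_pos (sin (2*k*y))); nra.
    + eapply Rle_trans; [|apply F2]. apply M2; auto. rewrite Rabs_Ropp, Rabs_mult, Hk0. generalize (Rabs_pos (sin (k*x))); nra.
    + eapply Rle_trans; [|apply F3]. apply M2; auto. rewrite Rabs_Ropp, Rabs_mult, Hk1. generalize (Rabs_pos (sin (2*k*y))); nra.
    + apply Rle_trans with (B * 1 + B * 1). apply abs_add_le; apply abs_mul_le; auto. lra.
Qed.


Lemma abs_prod1 a b : Rabs a <= 1 -> Rabs b <= 1 -> - 1 <= a * b <= 1.
Proof. intros; apply abs_le_b. replace 1 with (1 * 1) by ring. apply abs_mul_le; auto. Qed.

Lemma Ag_good p q al p1 q1 al1 k x y t :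
  1000 <= k ->
  (forall t, is_derive p t (p1 t)) -> (forall t, is_derive q t (q1 t)) -> (forall t, is_derive al t (al1 t)) ->
  (forall t, continuous p1 t) -> (forall t, continuous q1 t) -> (forall t, continuous al1 t) ->
  Rabs (al t) <= 25 -> Rabs (p1 t) <= 1 -> Rabs (q1 t) <= 6 -> Rabs (al1 t) <= 300 ->
  goodA (Ag p q al k) x y t.
Proof.
  intros Hk Hp Hq Ha Cp1 Cq1 Ca1 Ba Bp1 Bq1 Ba1.
  assert (Hk0 : k <> 0) by lra.
  assert (Cp : forall t, continuous p t) by (intro; apply (cont_of_d _ _ _ Hp)).
  assert (Cq : forall t, continuous q t) by (intro; apply (cont_of_d _ _ _ Hq)).
  assert (Ca : forall t, continuous al t) by (intro; apply (cont_of_d _ _ _ Ha)).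
  generalize (abs_cos (k*x)) (abs_sin (k*x)) (abs_cos (2*k*y)) (abs_sin (2*k*y)); intros c1 s1 c2 s2.
  generalize (abs_prod1 _ _ c1 c2) (abs_prod1 _ _ s1 s2) (abs_prod1 _ _ s1 c2) (abs_prod1 _ _ c1 s2).
  intros W1 W2 W3 W4.
  set (w1 := cos (k * x) * cos (2 * k * y)) in *. set (w2 := sin (k * x) * sin (2 * k * y)) in *.
  set (w3 := sin (k * x) * cos (2 * k * y)) in *. set (w4 := cos (k * x) * sin (2 * k * y)) in *.
  assert (Hv : Rabs (al1 t / k) <= 3/10).
  { unfold Rdiv. rewrite Rabs_mult, Rabs_inv, (Rabs_pos_eq k) by lra.
    apply Rle_trans with (300 * / 1000). apply Rmult_le_compat; try lra.
    apply Rabs_pos. left; apply Rinv_0_lt_compat; lra. apply Rinv_le_contravar; lra.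
    lra. }
  assert (Hv4 : al1 t / (4 * k) = (al1 t / k) / 4) by (field; auto).
  apply abs_le_b in Ba, Bp1, Bq1, Hv.
  intros i j. split.
  - apply c3_cont3. destruct i, j; simpl; ctac; auto.
  - intros d. split; [|split].
    + eapply isd_pdex. apply Ag_isd; eauto.
    + erewrite pd_fun; [| intros; apply Ag_isd; eauto]. apply c3_cont3.
      destruct i, j, d; simpl; ctac; auto.
    + erewrite pd_fun; [| intros; apply Ag_isd; eauto].
      destruct i, j, d; simpl; fold w1 w2 w3 w4; try rewrite Hv4; apply abs_b; split; nra.
Qed.

Lemma Ag_ell p q al k x y t :
  1000 <= k -> 99/100 <= p t <= 1 -> 1/5 <= q t <= 2 -> Rabs (al t) <= 25 ->
  ellA (Ag p q al k) x y t.
Proof.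
  intros Hk Hp Hq Ha xi. unfold quadform, sqnorm, coord_sum; simpl.
  generalize (abs_prod1 _ _ (abs_cos (k*x)) (abs_cos (2*k*y))); intros W.
  set (w := cos (k * x) * cos (2 * k * y)) in *.
  assert (Hv : Rabs (al t / k) <= 25/1000).
  { unfold Rdiv. rewrite Rabs_mult, Rabs_inv, (Rabs_pos_eq k) by lra.
    apply Rle_trans with (25 * / 1000). apply Rmult_le_compat; try lra.
    apply Rabs_pos. left; apply Rinv_0_lt_compat; lra. apply Rinv_le_contravar; lra.
    lra. }
  assert (Hv4 : al t / (4 * k) = (al t / k) / 4) by (field; lra).
  rewrite Hv4. apply abs_le_b in Hv.
  set (v := al t / k) in *.
  assert (A1 : 9/10 <= p t + v * w <= 11/10) by nra.
  assert (A2 : 1/10 <= q t - v / 4 * w <= 21/10) by nra.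
  set (a1 := p t + v * w) in *. set (a2 := q t - v / 4 * w) in *.
  set (u1 := xi CX). set (u2 := xi CY).
  assert (E : u1 * a1 * u1 + u1 * (- v * (sin (k * x) * sin (2 * k * y))) * u2 +
     (u2 * (v * (sin (k * x) * sin (2 * k * y))) * u1 + u2 * a2 * u2) = a1 * u1^2 + a2 * u2^2) by ring.
  rewrite E. split; nra.
Qed.

Definition swp (f : fun3) : fun3 := fun x y t => f y x t.
Definition swd (d : dir) : dir := match d with DX => DY | DY => DX | DT => DT end.
Definition swc (c : coord) : coord := match c with CX => CY | CY => CX end.
Definition swA (A : matfun) : matfun := fun i j => swp (A (swc i) (swc j)).

Lemma pd_swp d f : pd d (swp f) = swp (pd (swd d) f).
Proof. apply functional_extensionality; intro x; apply functional_extensionality; intro y;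
  apply functional_extensionality; intro t; destruct d; reflexivity. Qed.
Lemma pdex_swp d f x y t : pdex (swd d) f y x t -> pdex d (swp f) x y t.
Proof. destruct d; simpl; auto. Qed.
Lemma cont3_swp f x y t : cont3 f y x t -> cont3 (swp f) x y t.
Proof. intros H eps He. destruct (H eps He) as [d [Hd Hc]]. exists d; split; auto.
  intros; unfold swp; apply Hc; auto. Qed.

Lemma goodU_swp u M x y t : goodU u M y x t -> goodU (swp u) M x y t.
Proof.
  intros [H1 [H2 [H3 [H4 [H5 [H6 [H7 H8]]]]]]].
  repeat split.
  - intros d; apply pdex_swp; auto.
  - intros d1 d2; rewrite pd_swp; apply pdex_swp; auto.
  - apply cont3_swp; auto.
  - intros d; rewrite pd_swp; apply cont3_swp; auto.
  - intros d1 d2; rewrite !pd_swp; apply cont3_swp; auto.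
  - unfold swp; auto.
  - intros d; rewrite pd_swp; unfold swp; auto.
  - intros d1 d2; rewrite !pd_swp; unfold swp; auto.
Qed.

Lemma goodA_swA A x y t : goodA A y x t -> goodA (swA A) x y t.
Proof.
  intros H i j. destruct (H (swc i) (swc j)) as [H1 H2]. split.
  - apply cont3_swp; auto.
  - intros d. destruct (H2 (swd d)) as [H3 [H4 H5]]. unfold swA. rewrite pd_swp.
    split; [apply pdex_swp; auto | split; [apply cont3_swp; auto | unfold swp; auto]].
Qed.

Lemma ellA_swA A x y t : ellA A y x t -> ellA (swA A) x y t.
Proof.
  intros H xi. specialize (H (fun c => xi (swc c))).
  unfold quadform, sqnorm, coord_sum, swA, swp in *; simpl in *. lra.
Qed.

Lemma pde_swp A u x y t : pde_expr (swA A) (swp u) x y t = pde_expr A u y x t.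
Proof.
  unfold pde_expr, coord_sum, pd, swA, swp; simpl. ring.
Qed.

Definition slab_eq (f g : fun3) lo hi := forall x y t, lo < t < hi -> f x y t = g x y t.

Lemma loc_slab lo hi t (P : R -> Prop) : lo < t < hi -> (forall s, lo < s < hi -> P s) -> locally t P.
Proof. intros Ht H. apply (locally_interval _ t lo hi); simpl; try lra. intros; apply H; lra. Qed.

Lemma pd_slab d f g lo hi : slab_eq f g lo hi -> slab_eq (pd d f) (pd d g) lo hi.
Proof.
  intros H x y t Ht. destruct d; simpl.
  - apply Derive_ext; intros; apply H; auto.
  - apply Derive_ext; intros; apply H; auto.
  - apply Derive_ext_loc. apply (loc_slab lo hi); auto; intros; apply H; auto.
Qed.

Lemma pdex_slab d f g lo hi x y t : slab_eq f g lo hi -> lo < t < hi -> pdex d g x y t -> pdex d f x y t.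
Proof.
  intros H Ht Hg. destruct d; simpl in *.
  - eapply ex_derive_ext; [|apply Hg]. intros; simpl; symmetry; apply H; auto.
  - eapply ex_derive_ext; [|apply Hg]. intros; simpl; symmetry; apply H; auto.
  - eapply ex_derive_ext_loc; [|apply Hg]. apply (loc_slab lo hi); auto; intros; symmetry; apply H; auto.
Qed.

Lemma cont3_slab f g lo hi x y t : slab_eq f g lo hi -> lo < t < hi -> cont3 g x y t -> cont3 f x y t.
Proof.
  intros H Ht Hg eps He. destruct (Hg eps He) as [d [Hd Hc]].
  exists (Rmin d (Rmin (t - lo) (hi - t))). split.
  - apply Rmin_pos; auto. apply Rmin_pos; lra.
  - intros x' y' t' H1 H2 H3.
    assert (Hm1 := Rmin_l d (Rmin (t - lo) (hi - t))).
    assert (Hm2 := Rmin_r d (Rmin (t - lo) (hi - t))).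
    assert (Hm3 := Rmin_l (t - lo) (hi - t)). assert (Hm4 := Rmin_r (t - lo) (hi - t)).
    generalize H3; intro H3'; apply Rabs_def2 in H3'.
    rewrite (H x' y' t'), (H x y t) by lra. apply Hc; lra.
Qed.

Lemma goodU_slab u U M lo hi x y t : slab_eq u U lo hi -> lo < t < hi -> goodU U M x y t -> goodU u M x y t.
Proof.
  intros E Ht [H1 [H2 [H3 [H4 [H5 [H6 [H7 H8]]]]]]].
  assert (E1 : forall d, slab_eq (pd d u) (pd d U) lo hi) by (intros; apply pd_slab; auto).
  assert (E2 : forall d1 d2, slab_eq (pd d2 (pd d1 u)) (pd d2 (pd d1 U)) lo hi) by (intros; apply pd_slab; auto).
  repeat split.
  - intros d; eapply pdex_slab; eauto.
  - intros d1 d2; eapply pdex_slab; eauto.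
  - eapply cont3_slab; eauto.
  - intros d; eapply cont3_slab; eauto.
  - intros d1 d2; eapply cont3_slab; eauto.
  - rewrite E; auto.
  - intros d; rewrite E1; auto.
  - intros d1 d2; rewrite E2; auto.
Qed.

Lemma goodA_slab A B lo hi x y t : (forall i j, slab_eq (A i j) (B i j) lo hi) -> lo < t < hi ->
  goodA B x y t -> goodA A x y t.
Proof.
  intros E Ht H i j. destruct (H i j) as [H1 H2]. split.
  - eapply cont3_slab; eauto.
  - intros d. destruct (H2 d) as [H3 [H4 H5]].
    assert (E1 : slab_eq (pd d (A i j)) (pd d (B i j)) lo hi) by (apply pd_slab; auto).
    split; [eapply pdex_slab; eauto | split; [eapply cont3_slab; eauto | rewrite E1; auto]].
Qed.

Lemma pde_slab A B u U lo hi x y t : slab_eq u U lo hi -> (forall i j, slab_eq (A i j) (B i j) lo hi) ->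
  lo < t < hi -> pde_expr A u x y t = pde_expr B U x y t.
Proof.
  intros Eu EA Ht. unfold pde_expr.
  assert (E2 : slab_eq (pd DT (pd DT u)) (pd DT (pd DT U)) lo hi) by (repeat apply pd_slab; auto).
  rewrite E2 by auto. f_equal.
  assert (G : forall i j, slab_eq (fun x' y' t' => A i j x' y' t' * pd (dir_of j) u x' y' t')
                                   (fun x' y' t' => B i j x' y' t' * pd (dir_of j) U x' y' t') lo hi).
  { intros i j x' y' t' H. rewrite EA, (pd_slab _ u U lo hi Eu) by auto. reflexivity. }
  unfold coord_sum. rewrite !(pd_slab _ _ _ lo hi (G _ _)) by auto. reflexivity.
Qed.

Lemma shift_d (h h' : R -> R) c : (forall t, is_derive h t (h' t)) ->
  forall t, is_derive (fun t => h (t - c)) t (h' (t - c)).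
Proof. intros H t. auto_derive. apply (Eeta _ _ _ H). rewrite (Deta _ _ _ H). unfold Rminus; ring. Qed.
Lemma shift_c (h : R -> R) c : (forall t, continuous h t) -> forall t, continuous (fun t => h (t - c)) t.
Proof. intros H t. apply (continuous_comp (fun t => t - c) h).
  apply (ex_derive_continuous (K:=R_AbsRing) (V:=R_NormedModule)). auto_derive; auto. apply H. Qed.

Lemma cont_d (h : R -> R) : (forall t, ex_derive h t) -> forall t, continuous h t.
Proof. intros H t. apply (ex_derive_continuous (K:=R_AbsRing) (V:=R_NormedModule)). apply H. Qed.

Ltac ude := unfold FF2, GG2, pp1, qq1; unfold EE, FC; unfold Phi, Phi1, Phi2, Phi3, th, th1, th2, th3.

Lemma FF2_c a k t : continuous (FF2 a k) t.
Proof. apply cont_d. intro. ude. auto_derive. repeat split; auto. Qed.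
Lemma GG2_c a k t : continuous (GG2 a k) t.
Proof. apply cont_d. intro. ude. auto_derive. repeat split; auto. Qed.
Lemma pp1_c k t : continuous (pp1 k) t.
Proof. apply cont_d. intro. ude. auto_derive. repeat split; auto. Qed.
Lemma qq1_c k t : continuous (qq1 k) t.
Proof. apply cont_d. intro. ude. auto_derive. repeat split; auto. Qed.
Lemma al1_c k t : continuous (al1 k) t.
Proof.
  apply (continuous_ext (fun t => PI/2 * Rf4 (t-2) * / k + (- 2 * (Phi2 k t * th1 t + Phi1 k t * th2 t) * / k))).
  - intros x. change (@eq R (PI / 2 * Rf4 (x - 2) * / k + -2 * (Phi2 k x * th1 x + Phi1 k x * th2 x) * / k) (al1 k x)). unfold al1, th3, Rdiv; ring.
  - apply (continuous_plus (fun t => PI/2 * Rf4 (t-2) * / k)).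
    + apply (continuous_mult (fun t => PI/2 * Rf4 (t-2)) (fun _ => / k)); [|apply continuous_const].
      apply (continuous_mult (fun _ => PI/2) (fun t => Rf4 (t-2))); [apply continuous_const|].
      apply (shift_c Rf4 2). apply Rf4_c.
    + apply cont_d. intro. unfold Phi2, Phi1, th1, th2. auto_derive. repeat split; auto.
Qed.

Definition sh (h : R -> R) (c : R) : R -> R := fun t => h (t - c).
Definition MU a k c : fun3 := Ug (sh (FF a k) c) (sh (GG a k) c) k.
Definition MA k c : matfun := Ag (sh (pp k) c) (sh (qq k) c) (sh (al k) c) k.

Lemma sh_d (h h' : R -> R) c : (forall t, is_derive h t (h' t)) -> forall t, is_derive (sh h c) t (sh h' c t).
Proof. intros; unfold sh; apply shift_d; auto. Qed.
Lemma sh_c (h : R -> R) c : (forall t, continuous h t) -> forall t, continuous (sh h c) t.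
Proof. intros; unfold sh; apply shift_c; auto. Qed.

Lemma MU_good a k c x y t : 1000 <= k -> 0 < a -> c <= t ->
  goodU (MU a k c) (48 * k^4 * a) x y t.
Proof.
  intros Hk Ha Ht.
  replace (48 * k^4 * a) with (8 * k^2 * (a * (6 * k^2))) by ring.
  destruct (bnd_FG a k (t - c) Hk) as [B0 [B1 [B2 [B3 [B4 B5]]]]].
  assert (HB : Rabs a * exp (- (k * (t - c))) * (6 * k ^ 2) <= a * (6 * k^2)).
  { rewrite Rabs_pos_eq by lra. apply Rmult_le_compat_r. nra.
    rewrite <- (Rmult_1_r a) at 2. apply Rmult_le_compat_l; [lra|].
    rewrite <- exp_0. apply exp_le_m. nra. }
  unfold MU. apply Ug_good with (f1 := sh (FF1 a k) c) (g1 := sh (GG1 a k) c) (f2 := sh (FF2 a k) c) (g2 := sh (GG2 a k) c); try lra.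
  - apply sh_d. intros; apply FF_d.
  - apply sh_d. intros; apply GG_d.
  - apply sh_d. intros; apply FF1_d.
  - apply sh_d. intros; apply GG1_d.
  - apply sh_c. intros; apply FF2_c.
  - apply sh_c. intros; apply GG2_c.
  all: unfold sh; lra.
Qed.

Lemma MA_good k c x y t : 1000 <= k -> goodA (MA k c) x y t.
Proof.
  intros Hk. assert (Hk0 : k <> 0) by lra.
  destruct (bnd_coef k (t - c) Hk) as [_ [_ [Ba [Bp1 [Bq1 Ba1]]]]].
  unfold MA. apply Ag_good with (p1 := sh (pp1 k) c) (q1 := sh (qq1 k) c) (al1 := sh (al1 k) c); auto.
  - apply sh_d. intros; apply pp_d; auto.
  - apply sh_d. intros; apply qq_d; auto.
  - apply sh_d. intros; apply al_d; auto.
  - apply sh_c. intros; apply pp1_c.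
  - apply sh_c. intros; apply qq1_c.
  - apply sh_c. intros; apply al1_c.
Qed.

Lemma MA_ell k c x y t : 1000 <= k -> ellA (MA k c) x y t.
Proof.
  intros Hk. destruct (bnd_coef k (t - c) Hk) as [Hp [Hq [Ba _]]].
  unfold MA. apply Ag_ell; auto.
Qed.

Lemma M_pde a k c x y t : k <> 0 -> pde_expr (MA k c) (MU a k c) x y t = 0.
Proof.
  intros Hk. unfold MA, MU.
  apply Ug_pde with (f1 := sh (FF1 a k) c) (g1 := sh (GG1 a k) c) (f2 := sh (FF2 a k) c) (g2 := sh (GG2 a k) c); auto.
  - apply sh_d. intros; apply FF_d.
  - apply sh_d. intros; apply GG_d.
  - apply sh_d. intros; apply FF1_d.
  - apply sh_d. intros; apply GG1_d.
  - unfold sh. apply FF_ode; auto.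
  - unfold sh. apply GG_ode; auto.
Qed.

Definition ttn (n : nat) : R := 5 * (INR n - 1).
Definition stepn (t : R) : nat := Z.to_nat (up (t / 5)).

Lemma stepn_spec n t : (1 <= n)%nat -> ttn n <= t < ttn n + 5 -> stepn t = n.
Proof.
  intros Hn Ht. unfold stepn, ttn in *.
  assert (E : Z.of_nat n = up (t / 5)).
  { apply tech_up; rewrite <- INR_IZR_INZ; lra. }
  rewrite <- E. apply Nat2Z.id.
Qed.

Lemma stepn_ge t : 0 <= t -> (1 <= stepn t)%nat /\ ttn (stepn t) <= t < ttn (stepn t) + 5.
Proof.
  intros Ht. destruct (archimed (t / 5)) as [H1 H2].
  assert (Hz : (0 < up (t / 5))%Z). { apply lt_IZR. simpl. lra. }
  unfold stepn, ttn. rewrite INR_IZR_INZ, Z2Nat.id by lia.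
  split; [|lra]. lia.
Qed.

Definition amp n0 n := exp (- (13/2) * (kk n0 n - kk n0 1)).
Definition ccn n0 n := amp n0 n * exp (kk n0 n * ttn n).
Definition Un n0 n : fun3 :=
  if Nat.odd n then MU (amp n0 n) (kk n0 n) (ttn n) else swp (MU (amp n0 n) (kk n0 n) (ttn n)).
Definition An n0 n : matfun :=
  if Nat.odd n then MA (kk n0 n) (ttn n) else swA (MA (kk n0 n) (ttn n)).
Definition ug n0 : fun3 := fun x y t => Un n0 (stepn t) x y t.
Definition Ag0 n0 : matfun := fun i j x y t => An n0 (stepn t) i j x y t.
Definition idm (i j : coord) : R := match i, j with | CX, CX | CY, CY => 1 | _, _ => 0 end.

Lemma kk_S n0 n : (1 <= n)%nat -> kk n0 (S n) = 2 * kk n0 n.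
Proof. intros; unfold kk. replace (S n + n0 - 1)%nat with (S (n + n0 - 1)) by lia. simpl; ring. Qed.
Lemma kk_pos n0 n : 0 < kk n0 n.
Proof. unfold kk; apply pow_lt; lra. Qed.
Lemma kk_ge n0 n : (10 <= n0)%nat -> (1 <= n)%nat -> 1000 <= kk n0 n.
Proof.
  intros; unfold kk. apply Rle_trans with (2 ^ 10). simpl; lra.
  apply Rle_pow; [lra | lia].
Qed.
Lemma ttn_S n : ttn (S n) = ttn n + 5.
Proof. unfold ttn; rewrite S_INR; ring. Qed.
Lemma amp_S n0 n : (1 <= n)%nat -> amp n0 (S n) = amp n0 n * exp (- (13/2) * kk n0 n).
Proof. intros; unfold amp; rewrite kk_S by auto; rewrite <- exp_plus; f_equal; ring. Qed.
Lemma amp_pos n0 n : 0 < amp n0 n.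
Proof. apply exp_pos. Qed.
Lemma ttn_ge n : (1 <= n)%nat -> 0 <= ttn n.
Proof. intros; unfold ttn. apply le_INR in H. simpl in H. lra. Qed.

Lemma MA_id k c x y t i j : k <> 0 -> t - c <= 1 \/ 4 <= t - c -> MA k c i j x y t = idm i j.
Proof.
  intros Hk [H|H]; [destruct (win_start 1 k (t - c) Hk H) as [_ [_ [Hp [Hq Ha]]]]
                   |destruct (win_end 1 k (t - c) Hk H) as [_ [_ [Hp [Hq Ha]]]]];
  unfold MA, Ag, sh; destruct i, j; simpl; rewrite ?Hp, ?Hq, ?Ha; field; auto.
Qed.

Lemma An_id n0 n x y t i j : (1 <= n)%nat -> t - ttn n <= 1 \/ 4 <= t - ttn n -> An n0 n i j x y t = idm i j.
Proof.
  intros Hn H. assert (Hk : kk n0 n <> 0) by (generalize (kk_pos n0 n); lra).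
  unfold An. destruct (Nat.odd n).
  - apply MA_id; auto.
  - unfold swA, swp. rewrite MA_id; auto. destruct i, j; reflexivity.
Qed.

Lemma Un_svar n0 n x y t : (1 <= n)%nat ->
  Un n0 n x y t = sh (FF (amp n0 n) (kk n0 n)) (ttn n) t * cos (kk n0 n * svar n x y)
                + sh (GG (amp n0 n) (kk n0 n)) (ttn n) t * cos (kk n0 (S n) * svar (S n) x y).
Proof.
  intros Hn. rewrite (kk_S n0 n Hn). unfold Un, MU, Ug, svar, swp.
  rewrite Nat.odd_succ, <- Nat.negb_odd. destruct (Nat.odd n); simpl; reflexivity.
Qed.

Lemma Un_junc n0 n x y t : (1 <= n)%nat -> ttn (S n) - 1 <= t <= ttn (S n) + 1 ->
  Un n0 n x y t = Un n0 (S n) x y t.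
Proof.
  intros Hn Ht. rewrite ttn_S in Ht.
  rewrite (Un_svar n0 n), (Un_svar n0 (S n)) by lia.
  assert (Hk : kk n0 n <> 0) by (generalize (kk_pos n0 n); lra).
  assert (Hk' : kk n0 (S n) <> 0) by (generalize (kk_pos n0 (S n)); lra).
  unfold sh.
  destruct (win_end (amp n0 n) (kk n0 n) (t - ttn n) Hk) as [E1 [E2 _]]; [lra|].
  destruct (win_start (amp n0 (S n)) (kk n0 (S n)) (t - ttn (S n)) Hk') as [E3 [E4 _]]; [rewrite ttn_S; lra|].
  rewrite E1, E2, E3, E4. rewrite amp_S, kk_S, ttn_S by auto.
  rewrite (Rmult_assoc (amp n0 n) (exp _) (exp _)), <- exp_plus.
  replace (- (13 / 2) * kk n0 n + - (2 * kk n0 n * (t - (ttn n + 5)))) with (- (kk n0 n * (2 * (t - ttn n) - 7 / 2))) by field.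
  ring.
Qed.

Lemma An_junc n0 n x y t i j : (1 <= n)%nat -> ttn (S n) - 1 <= t <= ttn (S n) + 1 ->
  An n0 n i j x y t = An n0 (S n) i j x y t.
Proof.
  intros Hn Ht. rewrite ttn_S in Ht.
  rewrite (An_id n0 n), (An_id n0 (S n)); auto; try lia; try (right; lra); try (left; rewrite ttn_S; lra).
Qed.

Lemma step_near n m t : (1 <= n)%nat -> (1 <= m)%nat -> ttn m <= t < ttn m + 5 ->
  ttn n - 1 < t < ttn n + 6 -> m = n \/ m = S n \/ S m = n.
Proof.
  intros Hn Hm H1 H2. unfold ttn in *.
  assert (A1 : INR m < INR (n + 2)) by (rewrite plus_INR; simpl; lra).
  assert (A2 : INR n < INR (m + 2)) by (rewrite plus_INR; simpl; lra).
  apply INR_lt in A1, A2. lia.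
Qed.

Lemma ug_slab n0 t : 0 < t ->
  Rmax 0 (ttn (stepn t) - 1) < t < ttn (stepn t) + 6 /\
  slab_eq (ug n0) (Un n0 (stepn t)) (Rmax 0 (ttn (stepn t) - 1)) (ttn (stepn t) + 6) /\
  (forall i j, slab_eq (Ag0 n0 i j) (An n0 (stepn t) i j) (Rmax 0 (ttn (stepn t) - 1)) (ttn (stepn t) + 6)).
Proof.
  intros Ht. destruct (stepn_ge t) as [Hn Hs]; [lra|].
  set (n := stepn t) in *.
  assert (Key : forall t', Rmax 0 (ttn n - 1) < t' < ttn n + 6 ->
     (forall x y, Un n0 (stepn t') x y t' = Un n0 n x y t') /\
     (forall i j x y, An n0 (stepn t') i j x y t' = An n0 n i j x y t')).
  { intros t' Ht'. assert (Hm1 := Rmax_l 0 (ttn n - 1)). assert (Hm2 := Rmax_r 0 (ttn n - 1)).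
    destruct (stepn_ge t') as [Hm Hs']; [lra|].
    set (m := stepn t') in *. clearbody m n.
    destruct (step_near n m t' Hn Hm Hs') as [E|[E|E]]; [lra| | |].
    - subst m; auto.
    - subst m. rewrite ttn_S in Hs'. split; intros; symmetry; [apply Un_junc|apply An_junc]; auto; rewrite ttn_S; lra.
    - subst n. rewrite ttn_S in *.
      split; intros; [apply Un_junc|apply An_junc]; auto; rewrite ttn_S; lra. }
  split; [|split].
  - split; [|lra]. apply Rmax_lub_lt; lra.
  - intros x y t' H. apply Key; auto.
  - intros i j x y t' H. apply Key; auto.
Qed.

Lemma goodU_mono u M1 M2 x y t : M1 <= M2 -> goodU u M1 x y t -> goodU u M2 x y t.
Proof.
  intros HM [H1 [H2 [H3 [H4 [H5 [H6 [H7 H8]]]]]]].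
  split; [|split; [|split; [|split; [|split; [|split; [|split]]]]]]; auto.
  - lra.
  - intros; specialize (H7 d); lra.
  - intros; specialize (H8 d1 d2); lra.
Qed.

Lemma x_le_exp x : x <= exp x.
Proof. destruct (Req_dec x 0) as [->|H]. rewrite exp_0; lra. generalize (exp_ineq1 x H); lra. Qed.

Lemma kamp_bnd n0 n : (1 <= n)%nat -> kk n0 n ^ 4 * amp n0 n <= exp (13/2 * kk n0 1).
Proof.
  intros Hn. generalize (kk_pos n0 n); intros Hk.
  assert (H1 : kk n0 n ^ 4 <= exp (4 * kk n0 n)).
  { replace (exp (4 * kk n0 n)) with (exp (kk n0 n) ^ 4).
    apply pow_incr. split; [lra|apply x_le_exp].
    replace (4 * kk n0 n) with (kk n0 n + kk n0 n + kk n0 n + kk n0 n) by ring.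
    rewrite !exp_plus. ring. }
  unfold amp. apply Rle_trans with (exp (4 * kk n0 n) * exp (- (13 / 2) * (kk n0 n - kk n0 1))).
  apply Rmult_le_compat_r; [left; apply exp_pos|auto].
  rewrite <- exp_plus. apply exp_le_m. lra.
Qed.

Lemma Un_good n0 n x y t : (10 <= n0)%nat -> (1 <= n)%nat -> ttn n <= t ->
  goodU (Un n0 n) (48 * exp (13/2 * kk n0 1)) x y t.
Proof.
  intros H0 Hn Ht. apply goodU_mono with (48 * kk n0 n ^ 4 * amp n0 n).
  { generalize (kamp_bnd n0 n Hn); lra. }
  unfold Un. destruct (Nat.odd n).
  - apply MU_good; auto. apply kk_ge; auto. apply amp_pos.
  - apply goodU_swp. apply MU_good; auto. apply kk_ge; auto. apply amp_pos.
Qed.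

Lemma ug_good n0 x y t : (10 <= n0)%nat -> 0 < t -> goodU (ug n0) (48 * exp (13/2 * kk n0 1)) x y t.
Proof.
  intros H0 Ht. destruct (ug_slab n0 t Ht) as [Hlt [E _]].
  destruct (stepn_ge t) as [Hn Hs]; [lra|].
  eapply goodU_slab; eauto. apply Un_good; auto; lra.
Qed.

Lemma Ag0_good n0 x y t : (10 <= n0)%nat -> 0 < t -> goodA (Ag0 n0) x y t.
Proof.
  intros H0 Ht. destruct (ug_slab n0 t Ht) as [Hlt [_ E]].
  destruct (stepn_ge t) as [Hn Hs]; [lra|].
  eapply goodA_slab; eauto. unfold An. destruct (Nat.odd (stepn t)).
  - apply MA_good; apply kk_ge; auto.
  - apply goodA_swA. apply MA_good; apply kk_ge; auto.
Qed.

Lemma Ag0_ell n0 x y t : (10 <= n0)%nat -> 0 <= t -> ellA (Ag0 n0) x y t.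
Proof.
  intros H0 Ht. destruct (stepn_ge t) as [Hn Hs]; auto.
  assert (ellA (An n0 (stepn t)) x y t).
  { unfold An. destruct (Nat.odd (stepn t)).
    - apply MA_ell; apply kk_ge; auto.
    - apply ellA_swA. apply MA_ell; apply kk_ge; auto. }
  exact H.
Qed.

Lemma ug_pde n0 x y t : (10 <= n0)%nat -> 0 < t -> pde_expr (Ag0 n0) (ug n0) x y t = 0.
Proof.
  intros H0 Ht. destruct (ug_slab n0 t Ht) as [Hlt [E1 E2]].
  destruct (stepn_ge t) as [Hn Hs]; [lra|].
  rewrite (pde_slab _ _ _ _ _ _ x y t E1 E2 Hlt).
  assert (Hk : kk n0 (stepn t) <> 0) by (generalize (kk_pos n0 (stepn t)); lra).
  unfold An, Un. destruct (Nat.odd (stepn t)).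
  - apply M_pde; auto.
  - rewrite pde_swp. apply M_pde; auto.
Qed.

Lemma per_cos m x : cos (INR m * (x + 2 * PI)) = cos (INR m * x).
Proof. replace (INR m * (x + 2 * PI)) with (INR m * x + 2 * INR m * PI) by ring. apply cos_period. Qed.
Lemma per_sin m x : sin (INR m * (x + 2 * PI)) = sin (INR m * x).
Proof. replace (INR m * (x + 2 * PI)) with (INR m * x + 2 * INR m * PI) by ring. apply sin_period. Qed.
Lemma per_cos2 m x : cos (2 * INR m * (x + 2 * PI)) = cos (2 * INR m * x).
Proof. replace (2 * INR m) with (INR (2 * m)) by (rewrite mult_INR; simpl; ring). apply per_cos. Qed.
Lemma per_sin2 m x : sin (2 * INR m * (x + 2 * PI)) = sin (2 * INR m * x).
Proof. replace (2 * INR m) with (INR (2 * m)) by (rewrite mult_INR; simpl; ring). apply per_sin. Qed.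

Definition perf (f : fun3) := forall x y t, f (x + 2 * PI) y t = f x y t /\ f x (y + 2 * PI) t = f x y t.

Lemma perf_swp f : perf f -> perf (swp f).
Proof. intros H x y t; unfold swp; destruct (H y x t); split; auto. Qed.

Lemma MU_per a m c : perf (MU a (INR m) c).
Proof. intros x y t; unfold MU, Ug; rewrite per_cos, per_cos2; split; reflexivity. Qed.
Lemma MA_per m c i j : perf (MA (INR m) c i j).
Proof. intros x y t; unfold MA, Ag; destruct i, j; rewrite ?per_cos, ?per_cos2, ?per_sin, ?per_sin2; split; reflexivity. Qed.

Lemma kk_INR n0 n : kk n0 n = INR (2 ^ (n + n0 - 1)).
Proof. unfold kk; rewrite pow_INR; simpl; f_equal; ring. Qed.

Lemma Un_per n0 n : perf (Un n0 n).
Proof. unfold Un; rewrite kk_INR; destruct (Nat.odd n); [|apply perf_swp]; apply MU_per. Qed.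
Lemma An_per n0 n i j : perf (An n0 n i j).
Proof. unfold An; rewrite kk_INR; destruct (Nat.odd n); [apply MA_per|]. unfold swA. apply perf_swp, MA_per. Qed.

Lemma ug_per n0 : periodic_xy (ug n0).
Proof. intros x y t. unfold ug. apply Un_per. Qed.
Lemma Ag0_per n0 i j : periodic_xy (Ag0 n0 i j).
Proof. intros x y t. unfold Ag0. apply An_per. Qed.

Lemma ug_on_step n0 n x y t : (1 <= n)%nat -> ttn n <= t <= ttn n + 5 ->
  ug n0 x y t = Un n0 n x y t /\ forall i j, Ag0 n0 i j x y t = An n0 n i j x y t.
Proof.
  intros Hn Ht. unfold ug, Ag0.
  destruct (Rlt_dec t (ttn n + 5)).
  - rewrite (stepn_spec n t) by (auto; lra). auto.
  - rewrite (stepn_spec (S n) t) by (auto; rewrite ttn_S; lra).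
    split; intros; symmetry; [apply Un_junc|apply An_junc]; auto; rewrite ttn_S; lra.
Qed.

Lemma win1 n0 n x y t : (1 <= n)%nat -> ttn n <= t <= ttn n + 1/100 ->
  ug n0 x y t = ccn n0 n * cos (kk n0 n * svar n x y) * exp (- kk n0 n * t) /\ A_id (Ag0 n0) x y t.
Proof.
  intros Hn Ht. destruct (ug_on_step n0 n x y t Hn) as [E1 E2]; [lra|].
  split.
  - rewrite E1, Un_svar by auto. unfold sh.
    assert (Hk : kk n0 n <> 0) by (generalize (kk_pos n0 n); lra).
    destruct (win_start (amp n0 n) (kk n0 n) (t - ttn n) Hk) as [F1 [F2 _]]; [lra|].
    rewrite F1, F2. unfold ccn.
    replace (- (kk n0 n * (t - ttn n))) with (kk n0 n * ttn n + - kk n0 n * t) by ring.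
    rewrite exp_plus. ring.
  - intros i j. rewrite E2. rewrite An_id; try (destruct i, j; reflexivity); try lia; try (left; lra).
Qed.

Lemma win2 n0 n x y t : (1 <= n)%nat -> ttn (S n) - 1/100 <= t <= ttn (S n) ->
  ug n0 x y t = ccn n0 (S n) * cos (kk n0 (S n) * svar (S n) x y) * exp (- kk n0 (S n) * t) /\ A_id (Ag0 n0) x y t.
Proof.
  intros Hn Ht. rewrite ttn_S in Ht. destruct (ug_on_step n0 n x y t Hn) as [E1 E2]; [lra|].
  split.
  - rewrite E1, Un_svar by auto. unfold sh.
    assert (Hk : kk n0 n <> 0) by (generalize (kk_pos n0 n); lra).
    destruct (win_end (amp n0 n) (kk n0 n) (t - ttn n) Hk) as [F1 [F2 _]]; [lra|].
    rewrite F1, F2. unfold ccn. rewrite amp_S, ttn_S, kk_S by auto.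
    assert (EE : exp (- (kk n0 n * (2 * (t - ttn n) - 7 / 2))) = exp (- (13 / 2) * kk n0 n) * exp (2 * kk n0 n * (ttn n + 5)) * exp (- (2 * kk n0 n) * t))
      by (rewrite <- !exp_plus; f_equal; field).
    rewrite EE; ring.
  - intros i j. rewrite E2. rewrite An_id; try (destruct i, j; reflexivity); try lia; try (right; lra).
Qed.

Lemma rep n0 n x y t : (1 <= n)%nat -> ttn n <= t <= ttn (S n) ->
  ug n0 x y t = sh (FF (amp n0 n) (kk n0 n)) (ttn n) t * cos (kk n0 n * svar n x y)
              + sh (GG (amp n0 n) (kk n0 n)) (ttn n) t * cos (kk n0 (S n) * svar (S n) x y).
Proof.
  intros Hn Ht. rewrite ttn_S in Ht. destruct (ug_on_step n0 n x y t Hn) as [E1 _]; [lra|].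
  rewrite E1, Un_svar; auto.
Qed.

Lemma cpt (h : R -> R) t : continuous h t -> continuity_pt h t.
Proof. intros H; apply continuity_pt_filterlim; exact H. Qed.

Lemma uC2_gen (h h1 h2 : R -> R) M :
  (forall t, is_derive h t (h1 t)) -> (forall t, is_derive h1 t (h2 t)) -> (forall t, continuous h2 t) ->
  (forall t, 0 < t -> Rabs (h t) <= M /\ Rabs (h1 t) <= M /\ Rabs (h2 t) <= M) ->
  uniformly_C2_1 h.
Proof.
  intros H1 H2 C B.
  assert (D1 : Derive h = h1) by (apply functional_extensionality; intro; apply is_derive_unique, H1).
  assert (D2 : Derive h1 = h2) by (apply functional_extensionality; intro; apply is_derive_unique, H2).
  split.
  - intros t Ht. rewrite D1, D2. repeat split.
    + eexists; apply H1.
    + eexists; apply H2.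
    + apply cpt, (cont_of_d _ _ _ H1).
    + apply cpt, (cont_of_d _ _ _ H2).
    + apply cpt, C.
  - exists M. intros t Ht. rewrite D1, D2. auto.
Qed.

Lemma uC2_FG a k c : 1000 <= k -> 0 < a -> 0 <= c ->
  uniformly_C2_1 (sh (FF a k) c) /\ uniformly_C2_1 (sh (GG a k) c).
Proof.
  intros Hk Ha Hc.
  assert (B : forall t, 0 < t -> Rabs a * exp (- (k * (t - c))) * (6 * k ^ 2) <= a * exp (k * c) * (6 * k^2)).
  { intros t Ht. rewrite Rabs_pos_eq by lra. apply Rmult_le_compat_r; [nra|].
    apply Rmult_le_compat_l; [lra|]. apply exp_le_m. nra. }
  split.
  - apply uC2_gen with (sh (FF1 a k) c) (sh (FF2 a k) c) (a * exp (k * c) * (6 * k^2)).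
    + apply sh_d; intros; apply FF_d.
    + apply sh_d; intros; apply FF1_d.
    + apply sh_c; intros; apply FF2_c.
    + intros t Ht. specialize (B t Ht). destruct (bnd_FG a k (t - c) Hk) as [B0 [_ [B2 [_ [B4 _]]]]].
      unfold sh. repeat split; lra.
  - apply uC2_gen with (sh (GG1 a k) c) (sh (GG2 a k) c) (a * exp (k * c) * (6 * k^2)).
    + apply sh_d; intros; apply GG_d.
    + apply sh_d; intros; apply GG1_d.
    + apply sh_c; intros; apply GG2_c.
    + intros t Ht. specialize (B t Ht). destruct (bnd_FG a k (t - c) Hk) as [_ [B1 [_ [B3 [_ B5]]]]].
      unfold sh. repeat split; lra.
Qed.

Lemma FG_small a k t : 0 < k -> 0 < a -> 0 <= t -> Rabs (FF a k t) <= a /\ Rabs (GG a k t) <= a.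
Proof.
  intros Hk Ha Ht. generalize (exp_Phi k t Hk) (exp_pos (- Phi k t)); intros E1 E2.
  assert (E3 : exp (- (k * t)) <= 1) by (rewrite <- exp_0; apply exp_le_m; nra).
  unfold FF, GG. rewrite !Rabs_mult, (Rabs_pos_eq a), (Rabs_pos_eq (exp _)) by lra.
  generalize (abs_cos (th t)) (abs_sin (th t)) (Rabs_pos (cos (th t))) (Rabs_pos (sin (th t))). intros.
  assert (E4 : 0 <= a * exp (- Phi k t) <= a) by (split; nra).
  split; nra.
Qed.

Lemma exp_half_pow n : exp (INR n / 2) <= 2 ^ n.
Proof.
  assert (H : exp (1/2) <= 2).
  { assert (E : exp (1/2) * exp (1/2) = exp 1) by (rewrite <- exp_plus; f_equal; field).
    generalize exp_le_3 (exp_pos (1/2)); nra. }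
  induction n.
  - simpl. replace (0/2) with 0 by field. rewrite exp_0; lra.
  - rewrite S_INR. replace ((INR n + 1)/2) with (INR n / 2 + 1/2) by field.
    rewrite exp_plus. simpl. generalize (exp_pos (INR n / 2)) (exp_pos (1/2)); nra.
Qed.

Lemma amp_decay n0 n T : (10 <= n0)%nat -> (2 <= n)%nat -> T < 5 * INR n ->
  amp n0 n <= exp (- (1/10) * exp (1/10 * T)).
Proof.
  intros H0 Hn HT. unfold amp. apply exp_le_m.
  assert (E1 : exp (1/10 * T) <= 2 ^ n).
  { eapply Rle_trans; [|apply exp_half_pow]. apply exp_le_m. lra. }
  assert (Ek : kk n0 n = 2 ^ n * 2 ^ (n0 - 1)) by (unfold kk; rewrite <- pow_add; f_equal; lia).
  assert (Ek1 : kk n0 1 = 2 * 2 ^ (n0 - 1)) by (unfold kk; replace (1 + n0 - 1)%nat with (S (n0 - 1)) by lia; simpl; ring).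
  assert (P : 2 <= 2 ^ (n0 - 1)) by (replace 2 with (2^1) at 1 by ring; apply Rle_pow; [lra|lia]).
  assert (Q : 4 <= 2 ^ n) by (replace 4 with (2^2) by ring; apply Rle_pow; [lra|lia]).
  rewrite Ek, Ek1. nra.
Qed.

Lemma ug_decay n0 T x y t : (10 <= n0)%nat -> 5 <= T -> T <= t ->
  Rabs (ug n0 x y t) <= 2 * exp (- (1/10) * exp (1/10 * T)).
Proof.
  intros H0 HT Ht. destruct (stepn_ge t) as [Hn Hs]; [lra|].
  set (n := stepn t) in *. clearbody n.
  assert (Hn2 : (2 <= n)%nat).
  { unfold ttn in Hs. assert (INR 1 < INR n) by (simpl; lra). apply INR_lt in H. lia. }
  rewrite (rep n0 n) by (auto; rewrite ttn_S; lra).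
  unfold sh.
  destruct (FG_small (amp n0 n) (kk n0 n) (t - ttn n)) as [F G]; try lra.
  apply kk_pos. apply amp_pos.
  assert (D := amp_decay n0 n T H0 Hn2). unfold ttn in Hs. specialize (D ltac:(lra)).
  apply Rle_trans with (amp n0 n * 1 + amp n0 n * 1).
  apply abs_add_le; apply abs_mul_le; auto; apply abs_cos.
  lra.
Qed.

Lemma tt_unbounded (M : R) : exists n0', forall n, (n0' <= n)%nat -> M < ttn n.
Proof.
  destruct (archimed (Rabs M)) as [H1 H2].
  assert (Hz : (0 <= up (Rabs M))%Z). { apply le_IZR. generalize (Rabs_pos M); simpl; lra. }
  exists (S (Z.to_nat (up (Rabs M)))). intros n Hn.
  apply le_INR in Hn. rewrite S_INR, INR_IZR_INZ, Z2Nat.id in Hn by auto.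
  unfold ttn. generalize (Rle_abs M) (Rabs_pos M); intros. lra.
Qed.

Theorem mainTheorem7 :
  exists N : nat, forall n0 : nat, (N <= n0)%nat ->
  exists (A : matfun) (u : fun3) (c C : R) (tt cc : nat -> R),
    reg_class 80 60 A /\
    periodic_xy u /\ uniformly_C2 u /\
    (exists x y t, 0 <= t /\ u x y t <> 0) /\
    solves A u /\
    0 < c /\ 0 < C /\
    (exists T0, forall T, T0 <= T -> forall x y t, T <= t ->
        Rabs (u x y t) <= C * exp (- c * exp (c * T))) /\
    tt 1%nat = 0 /\ cc 1%nat = 1 /\
    (forall n, (1 <= n)%nat ->
        0 <= tt n /\ tt n < tt (S n) /\ tt (S n) - tt n > 3 / 100 /\ 0 < cc n) /\
    (forall M, exists n0', forall n, (n0' <= n)%nat -> M < tt n) /\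
    (forall n, (1 <= n)%nat ->
       (exists f g : R -> R, uniformly_C2_1 f /\ uniformly_C2_1 g /\
          forall x y t, tt n <= t <= tt (S n) ->
            u x y t = f t * cos (kk n0 n * svar n x y)
                      + g t * cos (kk n0 (S n) * svar (S n) x y)) /\
       (forall x y t, tt n <= t <= tt n + 1 / 100 ->
          u x y t = cc n * cos (kk n0 n * svar n x y) * exp (- kk n0 n * t)
          /\ A_id A x y t) /\
       (forall x y t, tt (S n) - 1 / 100 <= t <= tt (S n) ->
          u x y t = cc (S n) * cos (kk n0 (S n) * svar (S n) x y)
                    * exp (- kk n0 (S n) * t)
          /\ A_id A x y t)).
Proof.
  exists 10%nat. intros n0 H0.
  exists (Ag0 n0), (ug n0), (1/10), 2, ttn, (ccn n0).
  assert (Ett1 : ttn 1 = 0) by (unfold ttn; simpl; ring).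
  assert (Ecc1 : ccn n0 1 = 1) by (unfold ccn, amp; rewrite Ett1; rewrite Rminus_diag, Rmult_0_r, Rmult_0_r, exp_0; ring).
  split; [|split; [|split; [|split; [|split; [|split; [|split; [|split; [|split; [|split; [|split; [|split]]]]]]]]]]].
  -
    split; [|split].
    + intros i j; apply Ag0_per.
    + intros x y t Ht xi. apply (Ag0_ell n0 x y t H0 Ht).
    + intros i j x y t Ht. apply (Ag0_good n0 x y t H0 Ht).
  - apply ug_per.
  - split.
    + intros x y t Ht. destruct (ug_good n0 x y t H0 Ht) as [H1 [H2 [H3 [H4 [H5 _]]]]]. auto.
    + exists (48 * exp (13/2 * kk n0 1)). intros x y t Ht.
      destruct (ug_good n0 x y t H0 Ht) as [_ [_ [_ [_ [_ [H6 [H7 H8]]]]]]]. auto.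
  - exists 0, 0, 0. split; [lra|].
    destruct (win1 n0 1 0 0 0) as [E _]; [lia|rewrite Ett1; lra|].
    rewrite E, Ecc1. unfold svar; simpl. rewrite Rmult_0_r, Rmult_0_r, cos_0, exp_0. lra.
  - intros x y t Ht. apply (ug_pde n0 x y t H0 Ht).
  - lra.
  - lra.
  - exists 5. intros T HT x y t Ht. apply ug_decay; auto.
  - exact Ett1.
  - exact Ecc1.
  - intros n Hn. rewrite ttn_S. split; [apply ttn_ge; auto|]. split; [lra|]. split; [lra|].
    unfold ccn. apply Rmult_lt_0_compat; apply exp_pos.
  - apply tt_unbounded.
  - intros n Hn. split; [|split].
    + destruct (uC2_FG (amp n0 n) (kk n0 n) (ttn n)) as [Uf Ug']; auto.
      apply kk_ge; auto. apply amp_pos. apply ttn_ge; auto.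
      exists (sh (FF (amp n0 n) (kk n0 n)) (ttn n)), (sh (GG (amp n0 n) (kk n0 n)) (ttn n)).
      split; [auto|split; [auto|]]. intros x y t Ht. apply rep; auto.
    + intros x y t Ht. apply win1; auto.
    + intros x y t Ht. apply win2; auto.
Qed.
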